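(* Under the standing assumptions (in which the $\sigma_l$ are only required to be left- and right-differentiable), with $\lambda>0$, $1\le p<\infty$ and $\Omega\in\{\Omega_{in},\Omega_{out}\}$, for every $B\in\mathbb{R}$ the set of dimension tuples $\mathbf{d}=(d_1,\dots,d_{L-1})$ for which there exists a proper $B$-local minimum $(\mathbf{d},\mathbf{W})$ of $E$ is bounded.
   Context: Network: for dimensions $d_0,\dots,d_L$ and weights $\mathbf{W}=(W_1,\dots,W_L)$, $W_l\in\mathbb{R}^{d_{l-1}\times d_l}$, define for a row vector $x\in\mathbb{R}^{d_0}$: $x_0=x$, $z_l=x_{l-1}W_l$, $x_l=\sigma_l.(z_l)$ (elementwise), $f(\mathbf{W},x)=x_L$; $d_0,d_L$ are fixed and $d_1,\dots,d_{L-1}$ vary. $E(\mathbf{d},\mathbf{W})=\frac{1}{|D|}\sum_{(x,y)\in D}e(f(\mathbf{W},x),y)+\Omega(\mathbf{W},\lambda,p)$ with $D$ a finite dataset of pairs $(x,y)$, $x\in\mathbb{R}^{d_0}$, $y\in Y$. $\Omega_{in}(\mathbf{W},\lambda,p)=\lambda\sum_{l=1}^L\sum_{j=1}^{d_l}\|(W_l(i,j))_{i}\|_p$, $\Omega_{out}(\mathbf{W},\lambda,p)=\lambda\sum_{l=1}^L\sum_{i=1}^{d_{l-1}}\|(W_l(i,j))_{j}\|_p$. Standing assumptions: each $\sigma_l$ is left- and right-differentiable everywhere, and there are functions $b_{1,l},b_{2,l}:\mathbb{R}_{\ge0}\to\mathbb{R}_{\ge0}$ with $|\sigma_l(s)|\le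 b_{1,l}(S)|s|$ and $|\sigma_l^{\leftarrow}(s)|,|\sigma_l^{\rightarrow}(s)|\le b_{2,l}(S)$ whenever $|s|\le S$; $e$ is nonnegative, differentiable in its first argument, and there is $b_3$ with $e(v,y)\le S\Rightarrow\|\partial e(v,y)/\partial v\|_\infty\le b_3(S)$. Definitions: The fan-in of hidden unit $j$ in layer $l$ ($1\le l\le L-1$) is column $j$ of $W_l$; its fan-out is row $j$ of $W_{l+1}$. A pair $(\mathbf{d},\mathbf{W})$ is a local minimum of $E$ if $\mathbf{W}$ is a local minimum of $E(\mathbf{d},\cdot)$ with $\mathbf{d}$ fixed; it is $B$-locally minimal if moreover $E(\mathbf{d},\mathbf{W})\le B$. The proper dimensionality of $\mathbf{W}$ is the dimension tuple obtained by deleting all hidden units whose fan-in or fan-out (or both) is the zero vector; $(\mathbf{d},\mathbf{W})$ is proper if $\mathbf{d}$ equals the proper dimensionality of $\mathbf{W}$. A proper $B$-local minimum is a $B$-locally minimal local minimum that is proper. *)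

(* Defs.v *)
From Stdlib Require Import Reals List Arith.
Import ListNotations.
Open Scope R_scope.

(* Vectors in R^n are represented by functions nat -> R, of which only the
   entries of index < n are meaningful. *)

Fixpoint rsum (n : nat) (f : nat -> R) : R :=
  match n with
  | O => 0
  | S k => rsum k f + f k
  end.

(* x^p for x >= 0 and real p > 0, with the convention 0^p = 0 *)
Definition rpow (x p : R) : R :=
  if Rlt_dec 0 x then Rpower x p else 0.

Definition pnorm (p : R) (n : nat) (v : nat -> R) : R :=
  rpow (rsum n (fun i => rpow (Rabs (v i)) p)) (/ p).

Definition right_deriv (f : R -> R) (s D : R) : Prop :=
  forall eps, 0 < eps -> exists delta, 0 < delta /\
    forall h, 0 < h < delta -> Rabs ((f (s + h) - f s) / h - D) < eps.

Definition left_deriv (f : R -> R) (s D : R) : Prop :=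
  forall eps, 0 < eps -> exists delta, 0 < delta /\
    forall h, - delta < h < 0 -> Rabs ((f (s + h) - f s) / h - D) < eps.

(* v represents an element of R^n (entries of index >= n vanish) *)
Definition padded (n : nat) (v : nat -> R) : Prop :=
  forall i, (n <= i)%nat -> v i = 0.

Definition is_grad {Y : Type} (n : nat) (e : (nat -> R) -> Y -> R)
    (y : Y) (v g : nat -> R) : Prop :=
  forall eps, 0 < eps -> exists delta, 0 < delta /\
    forall h, padded n h -> (forall i, (i < n)%nat -> Rabs (h i) < delta) ->
      Rabs (e (fun i => v i + h i) y - e v y - rsum n (fun i => g i * h i))
        <= eps * rsum n (fun i => Rabs (h i)).

(* Network: d l = d_l (d 0 = d_0, d L = d_L), W l i j = W_l(i,j) for
   1 <= l <= L, i < d (l-1), j < d l (0-indexed units), sigma l = sigma_l. *)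
Fixpoint layer (d : nat -> nat) (sigma : nat -> R -> R)
    (W : nat -> nat -> nat -> R) (x : nat -> R) (l : nat) : nat -> R :=
  match l with
  | O => x
  | S k => fun j =>
      sigma (S k) (rsum (d k) (fun i => layer d sigma W x k i * W (S k) i j))
  end.

Definition net (L : nat) (d : nat -> nat) (sigma : nat -> R -> R)
    (W : nat -> nat -> nat -> R) (x : nat -> R) : nat -> R :=
  fun j => if Nat.ltb j (d L) then layer d sigma W x L j else 0.

Inductive reg_kind := Reg_in | Reg_out.

Definition lsum (L : nat) (F : nat -> R) : R := rsum L (fun k => F (S k)).

Definition Omega (k : reg_kind) (L : nat) (d : nat -> nat)
    (W : nat -> nat -> nat -> R) (lam p : R) : R :=
  match k with
  | Reg_in => lam * lsum L (fun l =>
      rsum (d l) (fun j => pnorm p (d (pred l)) (fun i => W l i j)))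
  | Reg_out => lam * lsum L (fun l =>
      rsum (d (pred l)) (fun i => pnorm p (d l) (fun j => W l i j)))
  end.

Definition Eobj {Y : Type} (k : reg_kind) (L : nat) (sigma : nat -> R -> R)
    (e : (nat -> R) -> Y -> R) (D : list ((nat -> R) * Y)) (lam p : R)
    (d : nat -> nat) (W : nat -> nat -> nat -> R) : R :=
  fold_right Rplus 0 (map (fun xy => e (net L d sigma W (fst xy)) (snd xy)) D)
    / INR (length D)
  + Omega k L d W lam p.

Definition local_min {Y : Type} (k : reg_kind) (L : nat) (sigma : nat -> R -> R)
    (e : (nat -> R) -> Y -> R) (D : list ((nat -> R) * Y)) (lam p : R)
    (d : nat -> nat) (W : nat -> nat -> nat -> R) : Prop :=
  exists eps, 0 < eps /\
    forall W' : nat -> nat -> nat -> R,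
      (forall l i j, (1 <= l <= L)%nat -> (i < d (pred l))%nat -> (j < d l)%nat ->
         Rabs (W' l i j - W l i j) < eps) ->
      Eobj k L sigma e D lam p d W <= Eobj k L sigma e D lam p d W'.

Fixpoint nonzero_vec (n : nat) (v : nat -> R) : bool :=
  match n with
  | O => false
  | S k => orb (nonzero_vec k v) (if Req_EM_T (v k) 0 then false else true)
  end.

Fixpoint countb (n : nat) (P : nat -> bool) : nat :=
  match n with
  | O => O
  | S k => (countb k P + (if P k then 1 else 0))%nat
  end.

(* proper dimensionality of W: hidden unit j of layer l (1 <= l <= L-1) is
   kept iff its fan-in (column j of W_l) and its fan-out (row j of W_{l+1})
   are both nonzero; d_0 and d_L are unchanged. *)
Definition proper_dim (L : nat) (d : nat -> nat) (W : nat -> nat -> nat -> R)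
    (l : nat) : nat :=
  if andb (Nat.ltb 0 l) (Nat.ltb l L) then
    countb (d l) (fun j =>
      andb (nonzero_vec (d (pred l)) (fun i => W l i j))
           (nonzero_vec (d (S l)) (fun k => W (S l) j k)))
  else d l.

Definition proper (L : nat) (d : nat -> nat) (W : nat -> nat -> nat -> R) : Prop :=
  forall l, (l <= L)%nat -> proper_dim L d W l = d l.

Definition proper_B_local_min {Y : Type} (k : reg_kind) (L : nat)
    (sigma : nat -> R -> R) (e : (nat -> R) -> Y -> R)
    (D : list ((nat -> R) * Y)) (lam p B : R)
    (d : nat -> nat) (W : nat -> nat -> nat -> R) : Prop :=
  local_min k L sigma e D lam p d W /\
  Eobj k L sigma e D lam p d W <= B /\
  proper L d W.

(* Main.v *)
Require Import Defs.
From Stdlib Require Import Reals List Arith Lra Lia Psatz FunctionalExtensionality Classical ZArith.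
Import ListNotations.
Open Scope R_scope.

Lemma rsum_ext n f g : (forall i, (i < n)%nat -> f i = g i) -> rsum n f = rsum n g.
Proof. induction n; simpl; intros H; auto. rewrite IHn by (intros; apply H; lia). rewrite H by lia; auto. Qed.

Lemma rsum_le n f g : (forall i, (i < n)%nat -> f i <= g i) -> rsum n f <= rsum n g.
Proof. induction n; simpl; intros H; [lra|]. pose proof (H n ltac:(lia)). pose proof (IHn ltac:(intros; apply H; lia)). lra. Qed.

Lemma rsum_nonneg n f : (forall i, (i < n)%nat -> 0 <= f i) -> 0 <= rsum n f.
Proof. intros H. replace 0 with (rsum n (fun _ => 0)). apply rsum_le; auto.
 clear H; induction n; simpl; auto; rewrite IHn; ring. Qed.

Lemma rsum_zero n : rsum n (fun _ => 0) = 0.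
Proof. induction n; simpl; auto; rewrite IHn; ring. Qed.

Lemma rsum_plus n f g : rsum n (fun i => f i + g i) = rsum n f + rsum n g.
Proof. induction n; simpl; [ring|]. rewrite IHn; ring. Qed.

Lemma rsum_minus n f g : rsum n (fun i => f i - g i) = rsum n f - rsum n g.
Proof. induction n; simpl; [ring|]. rewrite IHn; ring. Qed.

Lemma rsum_scal_l n c f : rsum n (fun i => c * f i) = c * rsum n f.
Proof. induction n; simpl; [ring|]. rewrite IHn; ring. Qed.

Lemma rsum_scal_r n c f : rsum n (fun i => f i * c) = rsum n f * c.
Proof. induction n; simpl; [ring|]. rewrite IHn; ring. Qed.

Lemma rsum_const n c : rsum n (fun _ => c) = INR n * c.
Proof. induction n; simpl rsum; [simpl; ring|]. rewrite IHn, S_INR; ring. Qed.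

Lemma rsum_abs n f : Rabs (rsum n f) <= rsum n (fun i => Rabs (f i)).
Proof. induction n; simpl. rewrite Rabs_R0; lra.
  eapply Rle_trans. apply Rabs_triang. lra. Qed.

Lemma rsum_term n f j : (j < n)%nat -> (forall i, (i < n)%nat -> 0 <= f i) -> f j <= rsum n f.
Proof. induction n; intros Hj H; [lia|]. simpl. destruct (Nat.eq_dec j n).
  subst. pose proof (rsum_nonneg n f ltac:(intros; apply H; lia)). lra.
  pose proof (IHn ltac:(lia) ltac:(intros; apply H; lia)). pose proof (H n ltac:(lia)). lra. Qed.

Lemma rsum_swap n m (f : nat -> nat -> R) :
  rsum n (fun i => rsum m (fun j => f i j)) = rsum m (fun j => rsum n (fun i => f i j)).
Proof. induction n; simpl. rewrite rsum_zero; auto.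
  rewrite IHn, <- rsum_plus; auto. Qed.

Lemma rsum_single n f j : (j < n)%nat -> (forall i, (i < n)%nat -> i <> j -> f i = 0) -> rsum n f = f j.
Proof. induction n; intros Hj H; [lia|]. simpl. destruct (Nat.eq_dec j n).
  subst. rewrite (rsum_ext n f (fun _ => 0)). rewrite rsum_zero; ring. intros; apply H; lia.
  rewrite IHn by (auto; lia). rewrite (H n); auto; ring. Qed.

Lemma rsum_change n f g j : (j < n)%nat -> (forall i, (i < n)%nat -> i <> j -> f i = g i) ->
  rsum n g = rsum n f + (g j - f j).
Proof. intros Hj H. assert (rsum n (fun i => g i - f i) = g j - f j).
  apply (rsum_single n (fun i => g i - f i)); auto. intros i Hi Hne; rewrite H; auto; ring.
  rewrite rsum_minus in H0. lra. Qed.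

Lemma rsum_lt n f g : (0 < n)%nat -> (forall i, (i < n)%nat -> f i < g i) -> rsum n f < rsum n g.
Proof. destruct n; intros; [lia|]. simpl.
  pose proof (rsum_le n f g ltac:(intros; left; apply H0; lia)). pose proof (H0 n ltac:(lia)). lra. Qed.

Lemma rsum_exists_big n f c : 0 < c -> c <= rsum n f ->
  exists i, (i < n)%nat /\ c / INR n <= f i.
Proof. intros Hc Hs. destruct (Nat.eq_dec n 0). subst; simpl in Hs; lra.
  assert (Hn: 0 < INR n) by (apply lt_0_INR; lia).
  apply NNPP; intro Hno.
  assert (Hall: forall i, (i < n)%nat -> f i < c / INR n).
  { intros i Hi. apply Rnot_le_lt. intro Hlt. apply Hno. exists i. split; auto. }
  pose proof (rsum_lt n f (fun _ => c / INR n) ltac:(lia) Hall).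
  rewrite rsum_const in H. field_simplify in H; lra. Qed.

Lemma Rpower_pos x q : 0 < Rpower x q.
Proof. unfold Rpower. apply exp_pos. Qed.

Lemma rpow_nonneg x q : 0 <= rpow x q.
Proof. unfold rpow. destruct (Rlt_dec 0 x). left; apply Rpower_pos. lra. Qed.

Lemma rpow_pos x q : 0 < x -> 0 < rpow x q.
Proof. intros. unfold rpow. destruct (Rlt_dec 0 x). apply Rpower_pos. lra. Qed.

Lemma rpow_mono x y q : 0 <= x <= y -> 0 < q -> rpow x q <= rpow y q.
Proof. intros. unfold rpow. destruct (Rlt_dec 0 x); destruct (Rlt_dec 0 y).
  apply Rle_Rpower_l; lra. lra. left; apply Rpower_pos. lra. Qed.

Lemma rpow_inv x q : 0 <= x -> q <> 0 -> rpow (rpow x q) (/ q) = x.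
Proof. intros. unfold rpow at 2. destruct (Rlt_dec 0 x).
  unfold rpow. destruct (Rlt_dec 0 (Rpower x q)).
  rewrite Rpower_mult, Rinv_r, Rpower_1; auto. exfalso; apply n; apply Rpower_pos.
  unfold rpow. destruct (Rlt_dec 0 0); lra. Qed.

Lemma rpow_inv' x q : 0 <= x -> q <> 0 -> rpow (rpow x (/ q)) q = x.
Proof. intros. rewrite <- (Rinv_inv q) at 2. apply rpow_inv; auto.
  apply Rinv_neq_0_compat; auto. Qed.

Lemma rpow_mult a b q : 0 <= a -> 0 <= b -> rpow (a * b) q = rpow a q * rpow b q.
Proof. intros. unfold rpow. destruct (Rlt_dec 0 a); destruct (Rlt_dec 0 b).
  destruct (Rlt_dec 0 (a*b)). rewrite Rpower_mult_distr; auto. exfalso; apply n; nra.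
  all: destruct (Rlt_dec 0 (a*b)); try ring; nra. Qed.

Lemma pnorm_nonneg p n v : 0 <= pnorm p n v.
Proof. apply rpow_nonneg. Qed.

Lemma pnorm_ent p n v i : 1 <= p -> (i < n)%nat -> Rabs (v i) <= pnorm p n v.
Proof. intros Hp Hi. unfold pnorm.
  rewrite <- (rpow_inv (Rabs (v i)) p) by (try apply Rabs_pos; lra).
  apply rpow_mono. split. apply rpow_nonneg.
  apply (rsum_term n (fun i => rpow (Rabs (v i)) p)); auto. intros; apply rpow_nonneg.
  apply Rinv_0_lt_compat; lra. Qed.

Lemma pnorm_ext p n v w : (forall i, (i < n)%nat -> v i = w i) -> pnorm p n v = pnorm p n w.
Proof. intros H. unfold pnorm. f_equal. apply rsum_ext. intros; rewrite H; auto. Qed.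

Lemma pnorm_scale p n c v : 1 <= p -> 0 <= c -> pnorm p n (fun i => c * v i) = c * pnorm p n v.
Proof. intros Hp Hc. unfold pnorm.
  rewrite (rsum_ext n _ (fun i => rpow c p * rpow (Rabs (v i)) p)).
  rewrite rsum_scal_l. rewrite rpow_mult. rewrite rpow_inv; auto; lra.
  apply rpow_nonneg. apply rsum_nonneg; intros; apply rpow_nonneg.
  intros. rewrite Rabs_mult, (Rabs_pos_eq c Hc). apply rpow_mult; auto. apply Rabs_pos. Qed.

Lemma pnorm_pow p n v : 1 <= p -> rpow (pnorm p n v) p = rsum n (fun i => rpow (Rabs (v i)) p).
Proof. intros Hp. unfold pnorm. apply rpow_inv'. apply rsum_nonneg; intros; apply rpow_nonneg. lra. Qed.

Lemma nonzero_vec_ex n v : nonzero_vec n v = true -> exists i, (i < n)%nat /\ v i <> 0.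
Proof. induction n; simpl; intros H. discriminate.
  apply Bool.orb_true_iff in H. destruct H as [H|H].
  destruct (IHn H) as [i [Hi Hv]]. exists i; split; auto; lia.
  destruct (Req_EM_T (v n) 0). discriminate. exists n; split; auto; lia. Qed.

Lemma pnorm_pos_nz p n v : 1 <= p -> nonzero_vec n v = true -> 0 < pnorm p n v.
Proof. intros Hp H. destruct (nonzero_vec_ex n v H) as [i [Hi Hv]].
  pose proof (pnorm_ent p n v i Hp Hi). pose proof (Rabs_pos_lt _ Hv). lra. Qed.

Lemma countb_le n P : (countb n P <= n)%nat.
Proof. induction n; simpl; auto. destruct (P n); lia. Qed.

Lemma countb_full n P : countb n P = n -> forall j, (j < n)%nat -> P j = true.
Proof. induction n; simpl; intros H j Hj. lia.
  pose proof (countb_le n P). destruct (P n) eqn:E.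
  destruct (Nat.eq_dec j n). subst; auto. apply IHn; lia. lia. Qed.

Definition natb (x : R) : nat := Z.to_nat (up x).
Lemma natb_ge x : x <= INR (natb x).
Proof. unfold natb. destruct (archimed x) as [H1 H2].
  destruct (ZArith_dec.Z_lt_le_dec (up x) 0).
  assert (IZR (up x) < 0) by (apply IZR_lt; auto). destruct (up x) eqn:E; try lia. simpl. lra.
  rewrite INR_IZR_INZ, Z2Nat.id by lia. lra. Qed.

Lemma left_cont f s D : left_deriv f s D -> exists delta, 0 < delta /\
  forall h, 0 < h < delta -> Rabs (f (s - h) - f s) <= (Rabs D + 1) * h.
Proof. intros H. destruct (H 1 ltac:(lra)) as [dl [Hdl Hh]]. exists dl; split; auto.
  intros h Hh0. specialize (Hh (-h) ltac:(lra)). replace (s + - h) with (s - h) in Hh by ring.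
  assert (E: f (s - h) - f s = ((f (s - h) - f s) / - h) * (- h)) by (field; lra).
  rewrite E, Rabs_mult, Rabs_Ropp, (Rabs_pos_eq h) by lra.
  apply Rmult_le_compat_r; [lra|].
  assert (Rabs ((f (s - h) - f s) / - h) <= Rabs (((f (s - h) - f s) / - h) - D) + Rabs D).
  { replace ((f (s - h) - f s) / - h) with ((((f (s - h) - f s) / - h) - D) + D) at 1 by ring. apply Rabs_triang. }
  lra. Qed.

Lemma right_step f s D K : Rabs D < K -> right_deriv f s D -> exists delta, 0 < delta /\
  forall h, 0 < h < delta -> Rabs (f (s + h) - f s) <= K * h.
Proof. intros HK H. destruct (H (K - Rabs D) ltac:(lra)) as [dl [Hdl Hh]]. exists dl; split; auto.
  intros h Hh0. specialize (Hh h Hh0).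
  assert (E: f (s + h) - f s = ((f (s + h) - f s) / h) * h) by (field; lra).
  rewrite E, Rabs_mult, (Rabs_pos_eq h) by lra.
  apply Rmult_le_compat_r; [lra|].
  assert (Rabs ((f (s + h) - f s) / h) <= Rabs (((f (s + h) - f s) / h) - D) + Rabs D).
  { replace ((f (s + h) - f s) / h) with ((((f (s + h) - f s) / h) - D) + D) at 1 by ring. apply Rabs_triang. }
  lra. Qed.

Lemma mvt_eps f M a b K : a <= b -> M < K ->
  (forall s, a <= s <= b -> exists Dl, left_deriv f s Dl) ->
  (forall s, a <= s <= b -> exists Dr, right_deriv f s Dr /\ Rabs Dr <= M) ->
  Rabs (f b - f a) <= K * (b - a).
Proof.
  intros Hab HMK Hl Hr.
  set (A := fun x => a <= x <= b /\ forall y, a <= y <= x -> Rabs (f y - f a) <= K * (y - a)).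
  assert (HA: exists x, A x).
  { exists a. split. lra. intros y Hy. replace y with a by lra. unfold Rminus; rewrite Rplus_opp_r, Rabs_R0. lra. }
  assert (HB: bound A). { exists b. intros x [Hx _]. lra. }
  destruct (completeness A HB HA) as [s [Hub Hlub]].
  assert (Has: a <= s). { apply Hub. unfold A. split. lra. intros y Hy. replace y with a by lra. unfold Rminus; rewrite Rplus_opp_r, Rabs_R0. lra. }
  assert (Hsb: s <= b). { apply Hlub. intros x [Hx _]. lra. }
  assert (Hbelow: forall y, a <= y < s -> Rabs (f y - f a) <= K * (y - a)).
  { intros y Hy. apply NNPP. intro Hno.
    assert (s <= y). { apply Hlub. intros x [Hx Hx2]. apply Rnot_lt_le. intro Hxy.
      apply Hno. apply Hx2. lra. } lra. }
  assert (Hs: Rabs (f s - f a) <= K * (s - a)).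
  { destruct (Req_dec s a) as [E|E]. subst s. unfold Rminus; rewrite Rplus_opp_r, Rabs_R0. lra.
    apply Rnot_lt_le. intro Hgt. set (g := Rabs (f s - f a) - K * (s - a)).
    destruct (Hl s ltac:(lra)) as [Dl HDl]. destruct (left_cont f s Dl HDl) as [dl [Hdl Hc]].
    assert (HK0': 0 <= K). { destruct (Hr a ltac:(lra)) as [D0 [_ HD0]]. pose proof (Rabs_pos D0). lra. }
    assert (HK0: 0 < K + Rabs Dl + 1) by (pose proof (Rabs_pos Dl); lra).
    set (h := Rmin (Rmin (dl/2) ((s - a)/2)) (g / (2 * (K + Rabs Dl + 1)))).
    assert (Hg: 0 < g) by (unfold g; lra).
    assert (Hh1: 0 < h). { unfold h. repeat apply Rmin_glb_lt; try lra. apply Rdiv_lt_0_compat; lra. }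
    assert (Hh2: h <= dl/2) by (unfold h; eapply Rle_trans; [apply Rmin_l|apply Rmin_l]).
    assert (Hh3: h <= (s-a)/2) by (unfold h; eapply Rle_trans; [apply Rmin_l|apply Rmin_r]).
    assert (Hh4: h <= g / (2 * (K + Rabs Dl + 1))) by (unfold h; apply Rmin_r).
    assert (Hh5: (K + Rabs Dl + 1) * h <= g / 2).
    { apply Rmult_le_compat_l with (r := K + Rabs Dl + 1) in Hh4; [|lra].
      replace ((K + Rabs Dl + 1) * (g / (2 * (K + Rabs Dl + 1)))) with (g/2) in Hh4 by (field; lra). lra. }
    pose proof (Hc h ltac:(lra)). pose proof (Hbelow (s - h) ltac:(lra)).
    assert (Rabs (f s - f a) <= Rabs (f (s - h) - f a) + Rabs (f (s - h) - f s)).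
    { replace (f s - f a) with ((f (s - h) - f a) - (f (s - h) - f s)) by ring.
      eapply Rle_trans. apply Rabs_triang. rewrite Rabs_Ropp. lra. }
    pose proof (Rabs_pos Dl). unfold g in *. nra. }
  assert (HsA: A s). { split. lra. intros y Hy. destruct (Req_dec y s). subst; auto. apply Hbelow; lra. }
  destruct (Req_dec s b) as [E|E]. { subst s. apply Hs. }
  exfalso.
  destruct (Hr s ltac:(lra)) as [Dr [HDr HDrM]].
  destruct (right_step f s Dr K ltac:(lra) HDr) as [dr [Hdr Hstep]].
  set (h := Rmin (dr/2) ((b - s)/2)).
  assert (Hh: 0 < h) by (unfold h; apply Rmin_glb_lt; lra).
  assert (Hh2: h <= dr/2) by apply Rmin_l. assert (Hh3: h <= (b-s)/2) by apply Rmin_r.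
  assert (A (s + h)).
  { split. lra. intros y Hy. destruct (Rle_lt_dec y s). apply HsA; lra.
    pose proof (Hstep (y - s) ltac:(lra)). replace (s + (y - s)) with y in H by ring.
    replace (f y - f a) with ((f y - f s) + (f s - f a)) by ring.
    eapply Rle_trans. apply Rabs_triang. nra. }
  pose proof (Hub _ H). lra.
Qed.

Lemma mvt f M a b : a <= b ->
  (forall s, a <= s <= b -> exists Dl, left_deriv f s Dl) ->
  (forall s, a <= s <= b -> exists Dr, right_deriv f s Dr /\ Rabs Dr <= M) ->
  Rabs (f b - f a) <= M * (b - a).
Proof. intros Hab Hl Hr. apply Rnot_lt_le. intro Hlt.
  destruct (Req_dec a b). subst. replace (f b - f b) with 0 in Hlt by ring. rewrite Rabs_R0 in Hlt. lra.
  set (eps := (Rabs (f b - f a) - M * (b - a)) / (2 * (b - a))).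
  assert (He: 0 < eps) by (unfold eps; apply Rdiv_lt_0_compat; lra).
  pose proof (mvt_eps f M a b (M + eps) Hab ltac:(lra) Hl Hr).
  assert ((M + eps) * (b - a) = M * (b - a) + (Rabs (f b - f a) - M * (b - a)) / 2) by (unfold eps; field; lra).
  lra. Qed.

Definition zz d sigma W x l k :=
  rsum (d (pred l)) (fun i => layer d sigma W x (pred l) i * W l i k).

Lemma layer_S d sigma W x m k : layer d sigma W x (S m) k = sigma (S m) (zz d sigma W x (S m) k).
Proof. reflexivity. Qed.

Definition NormOK (N : nat -> (nat -> R) -> R) : Prop :=
  (forall n v, 0 <= N n v) /\
  (forall n v i, (i < n)%nat -> Rabs (v i) <= N n v) /\
  (forall n u v c, 0 <= c -> (forall i, (i < n)%nat -> Rabs (u i) <= c * Rabs (v i)) -> N n u <= c * N n v).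

Lemma N_ext N n u v : NormOK N -> (forall i, (i < n)%nat -> u i = v i) -> N n u = N n v.
Proof. intros [_ [_ Hm]] H. apply Rle_antisym.
  rewrite <- (Rmult_1_l (N n v)). apply Hm; [lra|]. intros; rewrite H; auto; lra.
  rewrite <- (Rmult_1_l (N n u)). apply Hm; [lra|]. intros; rewrite H; auto; lra. Qed.

Definition MatOK N (d : nat -> nat) (W : nat -> nat -> nat -> R) C L : Prop :=
  forall l x, (1 <= l <= L)%nat ->
    N (d l) (fun k => rsum (d (pred l)) (fun i => x i * W l i k)) <= N (d (pred l)) x * C.

Fixpoint Rs (b1 : nat -> R -> R) X C m : R :=
  match m with O => X | S k => b1 (S k) (Rs b1 X C k * C) * (Rs b1 X C k * C) end.
Definition Ss b1 X C m := Rs b1 X C (pred m) * C.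

Lemma Rs_nonneg b1 X C m : (forall l S, 0 <= S -> 0 <= b1 l S) -> 0 <= X -> 0 <= C -> 0 <= Rs b1 X C m.
Proof. intros Hb HX HC. induction m; simpl; auto. apply Rmult_le_pos. apply Hb. nra. nra. Qed.

Lemma acts L d sigma b1 N W x C X :
  (forall l S, 0 <= S -> 0 <= b1 l S) ->
  (forall l S s, (1 <= l <= L)%nat -> 0 <= S -> Rabs s <= S -> Rabs (sigma l s) <= b1 l S * Rabs s) ->
  NormOK N -> MatOK N d W C L -> 0 <= C -> 0 <= X -> N (d 0%nat) x <= X ->
  forall m, (m <= L)%nat ->
    N (d m) (layer d sigma W x m) <= Rs b1 X C m /\
    ((1 <= m)%nat -> N (d m) (zz d sigma W x m) <= Ss b1 X C m).
Proof.
  intros Hb1 Hsig1 HN HM HC HX Hx. pose proof HN as [Hnn [Hent Hmono]].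
  induction m; intros Hm. split; [simpl; auto| intros; lia].
  destruct (IHm ltac:(lia)) as [IH _].
  assert (Hz: N (d (S m)) (zz d sigma W x (S m)) <= Ss b1 X C (S m)).
  { unfold zz, Ss. simpl pred. eapply Rle_trans. apply (HM (S m)); lia.
    apply Rmult_le_compat_r; auto. }
  split; [|auto].
  simpl Rs. fold (Ss b1 X C (S m)).
  apply Rle_trans with (b1 (S m) (Ss b1 X C (S m)) * N (d (S m)) (zz d sigma W x (S m))).
  apply Hmono. apply Hb1. unfold Ss; simpl; pose proof (Rs_nonneg b1 X C m Hb1 HX HC); nra.
  intros i Hi. rewrite layer_S. apply Hsig1. lia. unfold Ss; simpl; pose proof (Rs_nonneg b1 X C m Hb1 HX HC); nra.
  eapply Rle_trans. apply Hent; eauto. auto.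
  apply Rmult_le_compat_l; auto. apply Hb1. unfold Ss; simpl; pose proof (Rs_nonneg b1 X C m Hb1 HX HC); nra.
Qed.

Lemma layer_agree d sigma W W' x m :
  (forall q i j, (1 <= q <= m)%nat -> W' q i j = W q i j) ->
  forall j, layer d sigma W' x m j = layer d sigma W x m j.
Proof. induction m; intros H j; simpl; auto. f_equal. apply rsum_ext. intros i Hi.
  rewrite IHm. rewrite H; auto; lia. intros; apply H; lia. Qed.

Fixpoint Pr (b2 : nat -> R -> R) b1 X C m0 k : R :=
  match k with O => 1 | S k' => Pr b2 b1 X C m0 k' * (C * b2 (S (m0 + k')) (Ss b1 X C (S (m0 + k')))) end.

Lemma Pr_nonneg b2 b1 X C m0 k : (forall l S, 0 <= S -> 0 <= b1 l S) -> (forall l S, 0 <= S -> 0 <= b2 l S) ->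
  0 <= X -> 0 <= C -> 0 <= Pr b2 b1 X C m0 k.
Proof. intros. induction k; simpl. lra. apply Rmult_le_pos; auto. apply Rmult_le_pos; auto. apply H0.
  unfold Ss. apply Rmult_le_pos; auto. apply Rs_nonneg; auto. Qed.

Definition dlayer d sigma W W' x m := fun j => layer d sigma W' x m j - layer d sigma W x m j.

Lemma propag L d sigma b1 b2 N W W' x C X m0 :
  (forall l S, 0 <= S -> 0 <= b1 l S) ->
  (forall l S, 0 <= S -> 0 <= b2 l S) ->
  (forall l S s, (1 <= l <= L)%nat -> 0 <= S -> Rabs s <= S -> Rabs (sigma l s) <= b1 l S * Rabs s) ->
  (forall l S a b, (1 <= l <= L)%nat -> 0 <= S -> Rabs a <= S -> Rabs b <= S ->
      Rabs (sigma l b - sigma l a) <= b2 l S * Rabs (b - a)) ->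
  NormOK N -> MatOK N d W C L -> MatOK N d W' C L -> 0 <= C -> 0 <= X -> N (d 0%nat) x <= X ->
  (forall q i j, (m0 < q)%nat -> W' q i j = W q i j) ->
  forall k, (m0 + k <= L)%nat ->
    N (d (m0 + k)%nat) (dlayer d sigma W W' x (m0 + k)) <= Pr b2 b1 X C m0 k * N (d m0) (dlayer d sigma W W' x m0).
Proof.
  intros Hb1 Hb2 Hsig1 Hlip HN HM HM' HC HX Hx Heq. pose proof HN as [Hnn [Hent Hmono]].
  induction k; intros Hk. simpl. rewrite Nat.add_0_r. lra.
  simpl Pr. rewrite Nat.add_succ_r in Hk |- *.
  set (q := (m0 + k)%nat) in *.
  assert (HSs: 0 <= Ss b1 X C (S q)) by (unfold Ss; apply Rmult_le_pos; auto; apply Rs_nonneg; auto).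
  destruct (acts L d sigma b1 N W x C X Hb1 Hsig1 HN HM HC HX Hx (S q) Hk) as [_ Hz].
  destruct (acts L d sigma b1 N W' x C X Hb1 Hsig1 HN HM' HC HX Hx (S q) Hk) as [_ Hz'].
  specialize (Hz ltac:(lia)). specialize (Hz' ltac:(lia)).
  set (dz := fun k0 => rsum (d q) (fun i => dlayer d sigma W W' x q i * W (S q) i k0)).
  assert (Hdz: N (d (S q)) dz <= N (d q) (dlayer d sigma W W' x q) * C) by (apply (HM (S q)); lia).
  apply Rle_trans with (b2 (S q) (Ss b1 X C (S q)) * N (d (S q)) dz).
  apply Hmono; auto. intros i Hi. unfold dlayer. rewrite !layer_S.
  replace (dz i) with (zz d sigma W' x (S q) i - zz d sigma W x (S q) i).
  apply Hlip; auto. lia.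
  eapply Rle_trans; [apply Hent; eauto| auto]. eapply Rle_trans; [apply Hent; eauto| auto].
  unfold zz, dz, dlayer. simpl pred. rewrite <- rsum_minus. apply rsum_ext. intros i0 Hi0.
  rewrite Heq by lia. ring.
  pose proof (IHk ltac:(lia)). pose proof (Hb2 (S q) _ HSs).
  pose proof (Hnn (d q) (dlayer d sigma W W' x q)).
  apply Rle_trans with (b2 (S q) (Ss b1 X C (S q)) * (N (d q) (dlayer d sigma W W' x q) * C)).
  apply Rmult_le_compat_l; auto.
  apply Rle_trans with (b2 (S q) (Ss b1 X C (S q)) * (Pr b2 b1 X C m0 k * N (d m0) (dlayer d sigma W W' x m0) * C)).
  apply Rmult_le_compat_l; auto. apply Rmult_le_compat_r; auto.
  right; ring.
Qed.

Definition n1 n (v : nat -> R) := rsum n (fun i => Rabs (v i)).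
Fixpoint ninf n (v : nat -> R) : R :=
  match n with O => 0 | S k => Rmax (ninf k v) (Rabs (v k)) end.

Lemma ninf_nonneg n v : 0 <= ninf n v.
Proof. induction n; simpl. lra. eapply Rle_trans; [apply IHn| apply Rmax_l]. Qed.

Lemma ninf_ent n v i : (i < n)%nat -> Rabs (v i) <= ninf n v.
Proof. induction n; intros Hi; simpl. lia. destruct (Nat.eq_dec i n). subst; apply Rmax_r.
  eapply Rle_trans; [apply IHn; lia| apply Rmax_l]. Qed.

Lemma ninf_le n v c : 0 <= c -> (forall i, (i < n)%nat -> Rabs (v i) <= c) -> ninf n v <= c.
Proof. induction n; intros Hc H; simpl. auto. apply Rmax_lub. apply IHn; auto. apply H; lia. Qed.

Lemma NormOK_n1 : NormOK n1.
Proof. split; [|split].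
  intros; apply rsum_nonneg; intros; apply Rabs_pos.
  intros n v i Hi. apply (rsum_term n (fun i => Rabs (v i))); auto. intros; apply Rabs_pos.
  intros n u v c Hc H. unfold n1. rewrite <- rsum_scal_l. apply rsum_le; auto. Qed.

Lemma NormOK_ninf : NormOK ninf.
Proof. split; [|split].
  apply ninf_nonneg. apply ninf_ent.
  intros n u v c Hc H. apply ninf_le. pose proof (ninf_nonneg n v); nra.
  intros i Hi. eapply Rle_trans. apply H; auto. apply Rmult_le_compat_l; auto. apply ninf_ent; auto. Qed.

Lemma MatOK_in d W C L :
  (forall l i, (1 <= l <= L)%nat -> (i < d (pred l))%nat -> rsum (d l) (fun k => Rabs (W l i k)) <= C) ->
  MatOK n1 d W C L.
Proof. intros H l x Hl. unfold n1.
  apply Rle_trans with (rsum (d l) (fun k => rsum (d (pred l)) (fun i => Rabs (x i) * Rabs (W l i k)))).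
  apply rsum_le; intros k Hk. eapply Rle_trans. apply rsum_abs. right. apply rsum_ext; intros; apply Rabs_mult.
  rewrite <- rsum_swap. rewrite <- rsum_scal_r. apply rsum_le. intros i Hi.
  rewrite rsum_scal_l. apply Rmult_le_compat_l. apply Rabs_pos. apply H; auto. Qed.

Lemma MatOK_out d W C L :
  (forall l k, (1 <= l <= L)%nat -> (k < d l)%nat -> rsum (d (pred l)) (fun i => Rabs (W l i k)) <= C) ->
  0 <= C -> MatOK ninf d W C L.
Proof. intros H HC l x Hl. apply ninf_le. pose proof (ninf_nonneg (d (pred l)) x); nra.
  intros k Hk. eapply Rle_trans. apply rsum_abs.
  apply Rle_trans with (rsum (d (pred l)) (fun i => ninf (d (pred l)) x * Rabs (W l i k))).
  apply rsum_le; intros i Hi. rewrite Rabs_mult. apply Rmult_le_compat_r. apply Rabs_pos. apply ninf_ent; auto.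
  rewrite rsum_scal_l. apply Rmult_le_compat_l. apply ninf_nonneg. apply H; auto. Qed.

Lemma N_sum N n v : NormOK N -> rsum n (fun i => Rabs (v i)) <= INR n * N n v.
Proof. intros [_ [Hent _]]. rewrite <- rsum_const. apply rsum_le; auto. Qed.

Lemma net_padded L d sigma W x dL : d L = dL -> padded dL (net L d sigma W x).
Proof. intros Hd i Hi. unfold net. rewrite Hd. destruct (Nat.ltb_spec i dL); auto. lia. Qed.

Definition Fsum {Y : Type} L sigma (e : (nat -> R) -> Y -> R) (D : list ((nat -> R) * Y)) d W :=
  fold_right Rplus 0 (map (fun xy => e (net L d sigma W (fst xy)) (snd xy)) D).

Lemma Fsum_nonneg {Y : Type} L sigma (e : (nat -> R) -> Y -> R) D d W dL :
  (forall v y, padded dL v -> 0 <= e v y) -> d L = dL -> 0 <= Fsum L sigma e D d W.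
Proof. intros He Hd. unfold Fsum. induction D; simpl. lra.
  pose proof (He (net L d sigma W (fst a)) (snd a) (net_padded L d sigma W _ dL Hd)). lra. Qed.

Lemma Fsum_term {Y : Type} L sigma (e : (nat -> R) -> Y -> R) D d W dL xy :
  (forall v y, padded dL v -> 0 <= e v y) -> d L = dL -> In xy D ->
  e (net L d sigma W (fst xy)) (snd xy) <= Fsum L sigma e D d W.
Proof. intros He Hd Hin. unfold Fsum. induction D; simpl in *. contradiction.
  destruct Hin as [E|Hin]. subst xy.
  pose proof (Fsum_nonneg L sigma e D d W dL He Hd). unfold Fsum in H. lra.
  pose proof (IHD Hin). pose proof (He (net L d sigma W (fst a)) (snd a) (net_padded L d sigma W _ dL Hd)). lra. Qed.

Lemma Fsum_diff {Y : Type} L sigma (e : (nat -> R) -> Y -> R) D d W W' T :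
  (forall xy, In xy D -> e (net L d sigma W' (fst xy)) (snd xy) - e (net L d sigma W (fst xy)) (snd xy) <= T) ->
  Fsum L sigma e D d W' - Fsum L sigma e D d W <= INR (length D) * T.
Proof. unfold Fsum. induction D; intros H; cbn [fold_right map length]. simpl; lra.
  pose proof (IHD ltac:(intros; apply H; right; auto)). pose proof (H a ltac:(left; auto)).
  rewrite S_INR. lra. Qed.

Lemma avg_diff a b n T : 0 <= T -> a - b <= INR n * T -> a / INR n - b / INR n <= T.
Proof. intros HT H. destruct n. simpl in *. unfold Rdiv. rewrite Rinv_0. lra.
  assert (0 < INR (S n)) by (apply lt_0_INR; lia).
  replace (a / INR (S n) - b / INR (S n)) with ((a - b) / INR (S n)) by (field; lra).
  apply Rmult_le_reg_r with (INR (S n)); auto. unfold Rdiv. rewrite Rmult_assoc, Rinv_l by lra. lra. Qed.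

Lemma uniform_delta {A : Type} (P : A -> R -> Prop) (l : list A) :
  (forall a d1 d2, 0 < d1 <= d2 -> P a d2 -> P a d1) ->
  (forall a, In a l -> exists d, 0 < d /\ P a d) -> exists d, 0 < d /\ forall a, In a l -> P a d.
Proof. intros Hmono. induction l; intros H. exists 1; split; [lra| intros; contradiction].
  destruct (IHl ltac:(intros; apply H; right; auto)) as [d1 [Hd1 H1]].
  destruct (H a ltac:(left; auto)) as [d2 [Hd2 H2]].
  exists (Rmin d1 d2). split. apply Rmin_glb_lt; auto.
  intros b [E|Hb]. subst. apply Hmono with d2; auto. split. apply Rmin_glb_lt; auto. apply Rmin_r.
  apply Hmono with d1; auto. split. apply Rmin_glb_lt; auto. apply Rmin_l. Qed.

Lemma key {Y : Type} (L dL : nat) (sigma : nat -> R -> R) (e : (nat -> R) -> Y -> R)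
  (D : list ((nat -> R) * Y)) (b3 : R -> R) k lam p B d W (Wt : R -> nat -> nat -> nat -> R) P0 P Q :
  (forall S, 0 <= S -> 0 <= b3 S) ->
  (forall v y, padded dL v -> 0 <= e v y) ->
  (forall v y, padded dL v -> exists g, is_grad dL e y v g) ->
  (forall S v y g, 0 <= S -> padded dL v -> e v y <= S ->
             is_grad dL e y v g -> forall i, (i < dL)%nat -> Rabs (g i) <= b3 S) ->
  0 < lam -> d L = dL ->
  local_min k L sigma e D lam p d W -> Eobj k L sigma e D lam p d W <= B ->
  0 <= Omega k L d W lam p ->
  0 <= P0 -> 0 <= Q ->
  (forall t, 0 < t <= 1 -> forall l i j, (1 <= l <= L)%nat -> (i < d (pred l))%nat -> (j < d l)%nat ->
      Rabs (Wt t l i j - W l i j) <= t * P0) ->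
  (forall t, 0 < t <= 1 -> Omega k L d (Wt t) lam p = Omega k L d W lam p - lam * t * P) ->
  (forall t, 0 < t <= 1 -> forall xy, In xy D ->
      rsum dL (fun i => Rabs (net L d sigma (Wt t) (fst xy) i - net L d sigma W (fst xy) i)) <= t * Q) ->
  lam * P <= (b3 (INR (length D) * Rabs B) + 1) * Q.
Proof.
  intros Hb3 He_nonneg He_diff He_bound Hlam Hd [eps [Heps Hmin]] HE HOm HP0 HQ Hclose HOmt Hnet.
  set (Se := INR (length D) * Rabs B).
  set (b := b3 Se).
  assert (HSe: 0 <= Se) by (unfold Se; apply Rmult_le_pos; [apply pos_INR| apply Rabs_pos]).
  assert (Hb: 0 <= b) by (apply Hb3; auto).
  assert (HEu: Eobj k L sigma e D lam p d W = Fsum L sigma e D d W / INR (length D) + Omega k L d W lam p) by reflexivity.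
  assert (HF: Fsum L sigma e D d W <= Se).
  { pose proof (Fsum_nonneg L sigma e D d W dL He_nonneg Hd) as HF0.
    unfold Se. destruct (length D) eqn:El. destruct D; [|discriminate]. unfold Fsum, Se; simpl; lra.
    assert (Hn: 0 < INR (S n)) by (apply lt_0_INR; lia).
    assert (Fsum L sigma e D d W / INR (S n) <= B) by lra.
    apply Rmult_le_compat_r with (r := INR (S n)) in H; [|lra].
    unfold Rdiv in H. rewrite Rmult_assoc, Rinv_l in H by lra. pose proof (Rle_abs B). nra. }
  set (Pd := fun (xy : (nat -> R) * Y) (dl : R) => forall h, padded dL h -> (forall i, (i < dL)%nat -> Rabs (h i) < dl) ->
      e (fun i => net L d sigma W (fst xy) i + h i) (snd xy) - e (net L d sigma W (fst xy)) (snd xy)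
      <= (b + 1) * rsum dL (fun i => Rabs (h i))).
  destruct (uniform_delta Pd D) as [dl [Hdl HPd]].
  { intros a d1 d2 Hd12 H h Hh Hhd. apply H; auto. intros i Hi; specialize (Hhd i Hi); lra. }
  { intros xy Hin. set (v := net L d sigma W (fst xy)).
    assert (Hv: padded dL v) by apply net_padded, Hd.
    destruct (He_diff v (snd xy) Hv) as [g Hg].
    assert (Hev: e v (snd xy) <= Se) by (eapply Rle_trans; [apply (Fsum_term L sigma e D d W dL xy He_nonneg Hd Hin)| auto]).
    pose proof (He_bound Se v (snd xy) g HSe Hv Hev Hg) as Hgb.
    destruct (Hg 1 ltac:(lra)) as [dl [Hdl Hfr]].
    exists dl. split; auto. intros h Hh Hhd. specialize (Hfr h Hh Hhd).
    assert (rsum dL (fun i => g i * h i) <= b * rsum dL (fun i => Rabs (h i))).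
    { eapply Rle_trans. apply Rle_abs. eapply Rle_trans. apply rsum_abs. rewrite <- rsum_scal_l.
      apply rsum_le. intros i Hi. rewrite Rabs_mult. apply Rmult_le_compat_r. apply Rabs_pos. apply Hgb; auto. }
    pose proof (Rle_abs (e (fun i : nat => v i + h i) (snd xy) - e v (snd xy) - rsum dL (fun i : nat => g i * h i))).
    fold v. lra. }
  set (t := Rmin 1 (Rmin (eps / (2 * (P0 + 1))) (dl / (2 * (Q + 1))))).
  assert (Ht1: t <= 1) by apply Rmin_l.
  assert (Ht2: t <= eps / (2 * (P0 + 1))) by (eapply Rle_trans; [apply Rmin_r| apply Rmin_l]).
  assert (Ht3: t <= dl / (2 * (Q + 1))) by (eapply Rle_trans; [apply Rmin_r| apply Rmin_r]).
  assert (Ht0: 0 < t). { unfold t. repeat apply Rmin_glb_lt; try lra; apply Rdiv_lt_0_compat; lra. }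
  assert (HtP0: t * P0 < eps).
  { apply Rle_lt_trans with (eps / (2 * (P0 + 1)) * P0). apply Rmult_le_compat_r; auto.
    replace (eps / (2 * (P0 + 1)) * P0) with (eps * (P0 / (2 * (P0 + 1)))) by (field; lra).
    assert (P0 / (2 * (P0 + 1)) < 1). { apply Rmult_lt_reg_r with (2 * (P0 + 1)); [lra|].
      unfold Rdiv. rewrite Rmult_assoc, Rinv_l by lra. lra. }
    nra. }
  assert (HtQ: t * Q < dl).
  { apply Rle_lt_trans with (dl / (2 * (Q + 1)) * Q). apply Rmult_le_compat_r; auto.
    replace (dl / (2 * (Q + 1)) * Q) with (dl * (Q / (2 * (Q + 1)))) by (field; lra).
    assert (Q / (2 * (Q + 1)) < 1). { apply Rmult_lt_reg_r with (2 * (Q + 1)); [lra|].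
      unfold Rdiv. rewrite Rmult_assoc, Rinv_l by lra. lra. }
    nra. }
  assert (Hm: Eobj k L sigma e D lam p d W <= Eobj k L sigma e D lam p d (Wt t)).
  { apply Hmin. intros l i j Hl Hi Hj. eapply Rle_lt_trans. apply Hclose; auto. lra. }
  assert (HEt: Eobj k L sigma e D lam p d (Wt t) = Fsum L sigma e D d (Wt t) / INR (length D) + Omega k L d (Wt t) lam p) by reflexivity.
  rewrite HEu, HEt, HOmt in Hm by lra.
  assert (Hdiff: Fsum L sigma e D d (Wt t) / INR (length D) - Fsum L sigma e D d W / INR (length D) <= (b + 1) * (t * Q)).
  { apply avg_diff. apply Rmult_le_pos; [lra| nra]. apply Fsum_diff.
    intros xy Hin. set (h := fun i => net L d sigma (Wt t) (fst xy) i - net L d sigma W (fst xy) i).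
    assert (Hh: padded dL h).
    { intros i Hi. unfold h. rewrite (net_padded L d sigma (Wt t) _ dL Hd i Hi), (net_padded L d sigma W _ dL Hd i Hi). ring. }
    assert (Hs: rsum dL (fun i => Rabs (h i)) <= t * Q) by (apply Hnet; auto).
    assert (Hhd: forall i, (i < dL)%nat -> Rabs (h i) < dl).
    { intros i Hi. eapply Rle_lt_trans; [|apply HtQ]. eapply Rle_trans; [|apply Hs].
      apply (rsum_term dL (fun i => Rabs (h i))); auto. intros; apply Rabs_pos. }
    pose proof (HPd xy Hin h Hh Hhd) as Hpd.
    replace (fun i => net L d sigma W (fst xy) i + h i) with (net L d sigma (Wt t) (fst xy)) in Hpd.
    eapply Rle_trans. apply Hpd. apply Rmult_le_compat_l; [lra| auto].
    apply functional_extensionality. intros i. unfold h. ring. }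
  assert (lam * t * P <= (b + 1) * (t * Q)) by lra.
  apply Rmult_le_reg_r with t; auto. nra.
Qed.

Lemma Rabs_le_inv a S : Rabs a <= S -> - S <= a <= S.
Proof. intros. pose proof (Rle_abs a). pose proof (Rle_abs (-a)). rewrite Rabs_Ropp in H1. lra. Qed.

Lemma lip_from L (sigma : nat -> R -> R) b2 :
  (forall l s, (1 <= l <= L)%nat -> exists Dr, right_deriv (sigma l) s Dr) ->
  (forall l s, (1 <= l <= L)%nat -> exists Dl, left_deriv (sigma l) s Dl) ->
  (forall l S s Ds, (1 <= l <= L)%nat -> 0 <= S -> Rabs s <= S ->
             (left_deriv (sigma l) s Ds \/ right_deriv (sigma l) s Ds) -> Rabs Ds <= b2 l S) ->
  forall l S a b, (1 <= l <= L)%nat -> 0 <= S -> Rabs a <= S -> Rabs b <= S ->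
      Rabs (sigma l b - sigma l a) <= b2 l S * Rabs (b - a).
Proof. intros Hr Hl Hs l S a b Hl1 HS Ha Hb.
  assert (Hgen: forall a b, a <= b -> Rabs a <= S -> Rabs b <= S -> Rabs (sigma l b - sigma l a) <= b2 l S * (b - a)).
  { clear a b Ha Hb. intros a b Hab Ha Hb. apply mvt; auto.
    intros s Hs'. destruct (Hr l s Hl1) as [Dr HDr]. exists Dr; split; auto.
    apply (Hs l S s Dr Hl1 HS). apply Rabs_le. apply Rabs_le_inv in Ha. apply Rabs_le_inv in Hb. lra. right; auto. }
  destruct (Rle_dec a b). rewrite (Rabs_pos_eq (b - a)) by lra. apply Hgen; auto.
  rewrite <- Rabs_Ropp, Ropp_minus_distr, (Rabs_left (b - a)) by lra.
  replace (- (b - a)) with (a - b) by ring. apply Hgen; auto; lra. Qed.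

Definition Xb (N : nat -> (nat -> R) -> R) {Y : Type} d0 (D : list ((nat -> R) * Y)) : R :=
  fold_right (fun xy acc => Rmax (N d0 (fst xy)) acc) 0 D.

Lemma Xb_nonneg N {Y : Type} d0 (D : list ((nat -> R) * Y)) : 0 <= Xb N d0 D.
Proof. induction D; simpl. lra. eapply Rle_trans; [apply IHD| apply Rmax_r]. Qed.

Lemma Xb_ge N {Y : Type} d0 (D : list ((nat -> R) * Y)) xy : In xy D -> N d0 (fst xy) <= Xb N d0 D.
Proof. induction D; simpl; intros H. contradiction. destruct H as [E|H]. subst; apply Rmax_l.
  eapply Rle_trans; [apply IHD; auto| apply Rmax_r]. Qed.

Lemma lsum_term L F l : (1 <= l <= L)%nat -> (forall l, (1 <= l <= L)%nat -> 0 <= F l) -> F l <= lsum L F.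
Proof. intros Hl H. unfold lsum. replace l with (S (pred l)) at 1 by lia.
  apply (rsum_term L (fun k => F (S k))). lia. intros; apply H; lia. Qed.

Lemma lsum_nonneg L F : (forall l, (1 <= l <= L)%nat -> 0 <= F l) -> 0 <= lsum L F.
Proof. intros H. apply rsum_nonneg. intros; apply H; lia. Qed.

Lemma Omega_nonneg k L d W lam p : 0 < lam -> 0 <= Omega k L d W lam p.
Proof. intros. destruct k; simpl; apply Rmult_le_pos; try lra; apply lsum_nonneg; intros;
  apply rsum_nonneg; intros; apply pnorm_nonneg. Qed.

Lemma Fsum_avg_nonneg {Y : Type} L sigma (e : (nat -> R) -> Y -> R) D d W dL :
  (forall v y, padded dL v -> 0 <= e v y) -> d L = dL -> 0 <= Fsum L sigma e D d W / INR (length D).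
Proof. intros. pose proof (Fsum_nonneg L sigma e D d W dL H H0). destruct (length D).
  simpl. unfold Rdiv. rewrite Rinv_0. lra. unfold Rdiv; apply Rmult_le_pos; auto. left; apply Rinv_0_lt_compat, lt_0_INR; lia. Qed.

Lemma Omega_le_B {Y : Type} k L sigma (e : (nat -> R) -> Y -> R) D lam p B d W dL :
  (forall v y, padded dL v -> 0 <= e v y) -> d L = dL ->
  Eobj k L sigma e D lam p d W <= B -> Omega k L d W lam p <= B.
Proof. intros. pose proof (Fsum_avg_nonneg L sigma e D d W dL H H0).
  change (Fsum L sigma e D d W / INR (length D) + Omega k L d W lam p <= B) in H1. lra. Qed.

Lemma div_bound lam S B : 0 < lam -> lam * S <= B -> S <= Rabs B / lam.
Proof. intros. apply Rmult_le_reg_l with lam; auto. replace (lam * (Rabs B / lam)) with (Rabs B) by (field; lra).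
  pose proof (Rle_abs B). lra. Qed.

Lemma in_cols L d W lam p B : 0 < lam -> Omega Reg_in L d W lam p <= B ->
  forall l, (1 <= l <= L)%nat ->
    rsum (d l) (fun j => pnorm p (d (pred l)) (fun i => W l i j)) <= Rabs B / lam.
Proof. intros Hlam H l Hl. simpl in H. apply div_bound in H; auto.
  eapply Rle_trans; [|apply H]. apply (lsum_term L (fun l => rsum (d l) (fun j => pnorm p (d (pred l)) (fun i => W l i j)))); auto.
  intros; apply rsum_nonneg; intros; apply pnorm_nonneg. Qed.

Lemma out_rows L d W lam p B : 0 < lam -> Omega Reg_out L d W lam p <= B ->
  forall l, (1 <= l <= L)%nat ->
    rsum (d (pred l)) (fun i => pnorm p (d l) (fun j => W l i j)) <= Rabs B / lam.
Proof. intros Hlam H l Hl. simpl in H. apply div_bound in H; auto.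
  eapply Rle_trans; [|apply H]. apply (lsum_term L (fun l => rsum (d (pred l)) (fun i => pnorm p (d l) (fun j => W l i j)))); auto.
  intros; apply rsum_nonneg; intros; apply pnorm_nonneg. Qed.

Definition Win (W : nat -> nat -> nat -> R) l j0 t : nat -> nat -> nat -> R :=
  fun q i j => if andb (Nat.eqb q l) (Nat.eqb j j0) then (1 - t) * W q i j else W q i j.

Definition rowcons L d (W : nat -> nat -> nat -> R) C :=
  forall q i, (1 <= q <= L)%nat -> (i < d (pred q))%nat -> rsum (d q) (fun k => Rabs (W q i k)) <= C.

Lemma rowcons_dom L d W W' C : rowcons L d W C -> (forall q i k, Rabs (W' q i k) <= Rabs (W q i k)) -> rowcons L d W' C.
Proof. intros H H' q i Hq Hi. apply Rle_trans with (rsum (d q) (fun k => Rabs (W q i k))).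
  apply rsum_le; intros; apply H'. apply H; auto. Qed.

Lemma Win_dom W l j0 t : 0 <= t <= 1 -> forall q i k, Rabs (Win W l j0 t q i k) <= Rabs (W q i k).
Proof. intros Ht q i k. unfold Win. destruct (andb _ _). rewrite Rabs_mult, Rabs_pos_eq by lra.
  pose proof (Rabs_pos (W q i k)). nra. lra. Qed.

Lemma rowcons_in L d W lam p B : 1 <= p -> 0 < lam -> Omega Reg_in L d W lam p <= B -> rowcons L d W (Rabs B / lam).
Proof. intros Hp Hlam H q i Hq Hi. eapply Rle_trans; [|apply (in_cols L d W lam p B Hlam H q Hq)].
  apply rsum_le. intros k Hk. apply (pnorm_ent p (d (pred q)) (fun i => W q i k)); auto. Qed.

Lemma Win_other W l j0 t q i j : (q <> l \/ j <> j0) -> Win W l j0 t q i j = W q i j.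
Proof. intros H. unfold Win. destruct (Nat.eqb_spec q l); destruct (Nat.eqb_spec j j0); simpl; auto.
  exfalso; destruct H; auto. Qed.

Lemma Win_same W l j0 t i : Win W l j0 t l i j0 = (1 - t) * W l i j0.
Proof. unfold Win. rewrite !Nat.eqb_refl. reflexivity. Qed.

Lemma Omega_Win L d W lam p l j0 t : 1 <= p -> (1 <= l <= L)%nat -> (j0 < d l)%nat -> 0 <= t <= 1 ->
  Omega Reg_in L d (Win W l j0 t) lam p = Omega Reg_in L d W lam p - lam * t * pnorm p (d (pred l)) (fun i => W l i j0).
Proof. intros Hp Hl Hj Ht. simpl. unfold lsum.
  rewrite (rsum_change L (fun k => rsum (d (S k)) (fun j => pnorm p (d (pred (S k))) (fun i => W (S k) i j)))
     (fun k => rsum (d (S k)) (fun j => pnorm p (d (pred (S k))) (fun i => Win W l j0 t (S k) i j))) (pred l)).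
  replace (S (pred l)) with l by lia.
  rewrite (rsum_change (d l) (fun j => pnorm p (d (pred l)) (fun i => W l i j))
     (fun j => pnorm p (d (pred l)) (fun i => Win W l j0 t l i j)) j0); auto.
  rewrite (pnorm_ext p _ (fun i => Win W l j0 t l i j0) (fun i => (1 - t) * W l i j0)) by (intros; apply Win_same).
  rewrite pnorm_scale by lra. ring.
  intros j Hj' Hne. apply pnorm_ext. intros; rewrite Win_other; auto.
  lia.
  intros k Hk Hne. apply rsum_ext. intros j Hj'. apply pnorm_ext. intros. rewrite Win_other; auto. left; lia.
Qed.

Definition Kin L b1 b2 X C l :=
  Pr b2 b1 X C (S l) (L - S l) * b2 (S l) (Ss b1 X C (S l)) * b2 l (Ss b1 X C l) * Rs b1 X C (pred l).

Lemma in_netdiff L d sigma b1 b2 W x C X p l j0 t :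
  (forall l S, 0 <= S -> 0 <= b1 l S) ->
  (forall l S, 0 <= S -> 0 <= b2 l S) ->
  (forall l S s, (1 <= l <= L)%nat -> 0 <= S -> Rabs s <= S -> Rabs (sigma l s) <= b1 l S * Rabs s) ->
  (forall l S a b, (1 <= l <= L)%nat -> 0 <= S -> Rabs a <= S -> Rabs b <= S ->
      Rabs (sigma l b - sigma l a) <= b2 l S * Rabs (b - a)) ->
  1 <= p -> rowcons L d W C -> 0 <= C -> 0 <= X -> n1 (d 0%nat) x <= X ->
  (1 <= l < L)%nat -> (j0 < d l)%nat -> 0 <= t <= 1 ->
  n1 (d L) (dlayer d sigma W (Win W l j0 t) x L) <=
    t * (Kin L b1 b2 X C l * pnorm p (d (pred l)) (fun i => W l i j0) * rsum (d (S l)) (fun k => Rabs (W (S l) j0 k))).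
Proof.
  intros Hb1 Hb2 Hsig1 Hlip Hp HW HC HX Hx Hl Hj Ht.
  set (Wt := Win W l j0 t).
  assert (HM: MatOK n1 d W C L) by (apply MatOK_in; auto).
  assert (HM': MatOK n1 d Wt C L) by (apply MatOK_in; apply (rowcons_dom L d W); auto; apply Win_dom; auto).
  pose proof NormOK_n1 as HN. pose proof HN as [Hnn [Hent Hmono]].
  set (P := pnorm p (d (pred l)) (fun i => W l i j0)).
  set (r := rsum (d (S l)) (fun k => Rabs (W (S l) j0 k))).
  destruct l as [|m]; [lia|]. simpl pred in *.
  assert (Hag: forall j, layer d sigma Wt x m j = layer d sigma W x m j).
  { apply layer_agree. intros q i j Hq. unfold Wt; apply Win_other; left; lia. }
  destruct (acts L d sigma b1 n1 W x C X Hb1 Hsig1 HN HM HC HX Hx (S m) ltac:(lia)) as [_ Hz].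
  specialize (Hz ltac:(lia)).
  destruct (acts L d sigma b1 n1 W x C X Hb1 Hsig1 HN HM HC HX Hx m ltac:(lia)) as [Hlm _].
  set (z := zz d sigma W x (S m) j0).
  assert (Hzt: zz d sigma Wt x (S m) j0 = (1 - t) * z).
  { unfold z, zz. simpl pred. rewrite <- rsum_scal_l. apply rsum_ext. intros i Hi.
    rewrite Hag. unfold Wt; rewrite Win_same. ring. }
  assert (Hzo: forall k, k <> j0 -> zz d sigma Wt x (S m) k = zz d sigma W x (S m) k).
  { intros k Hk. unfold zz. simpl pred. apply rsum_ext. intros i Hi. rewrite Hag. unfold Wt; rewrite Win_other; auto. }
  assert (HSs: 0 <= Ss b1 X C (S m)) by (unfold Ss; apply Rmult_le_pos; auto; apply Rs_nonneg; auto).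
  assert (Hzb: Rabs z <= Ss b1 X C (S m)) by (eapply Rle_trans; [apply Hent; eauto| auto]).
  assert (Hzp: Rabs z <= Rs b1 X C m * P).
  { unfold z, zz. simpl pred. eapply Rle_trans. apply rsum_abs.
    apply Rle_trans with (rsum (d m) (fun i => Rabs (layer d sigma W x m i)) * P).
    rewrite <- rsum_scal_r. apply rsum_le. intros i Hi. rewrite Rabs_mult. apply Rmult_le_compat_l. apply Rabs_pos.
    apply (pnorm_ent p (d m) (fun i => W (S m) i j0)); auto.
    apply Rmult_le_compat_r. apply pnorm_nonneg. apply Hlm. }
  set (dx := dlayer d sigma W Wt x (S m) j0).
  assert (Hdx: Rabs dx <= b2 (S m) (Ss b1 X C (S m)) * (t * Rabs z)).
  { unfold dx, dlayer. rewrite !layer_S, Hzt. fold z. eapply Rle_trans. apply Hlip; eauto. lia.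
    rewrite Rabs_mult. rewrite (Rabs_pos_eq (1 - t)) by lra. pose proof (Rabs_pos z). nra.
    replace ((1 - t) * z - z) with (- t * z) by ring. rewrite Rabs_mult, Rabs_Ropp, (Rabs_pos_eq t) by lra. lra. }
  assert (Hdo: forall i, i <> j0 -> dlayer d sigma W Wt x (S m) i = 0).
  { intros i Hi. unfold dlayer. rewrite !layer_S, Hzo; auto. ring. }
  assert (HSs2: 0 <= Ss b1 X C (S (S m))) by (unfold Ss; apply Rmult_le_pos; auto; apply Rs_nonneg; auto).
  destruct (acts L d sigma b1 n1 W x C X Hb1 Hsig1 HN HM HC HX Hx (S (S m)) ltac:(lia)) as [_ Hz2].
  destruct (acts L d sigma b1 n1 Wt x C X Hb1 Hsig1 HN HM' HC HX Hx (S (S m)) ltac:(lia)) as [_ Hz2'].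
  specialize (Hz2 ltac:(lia)). specialize (Hz2' ltac:(lia)).
  assert (H2: n1 (d (S (S m))) (dlayer d sigma W Wt x (S (S m))) <= b2 (S (S m)) (Ss b1 X C (S (S m))) * (Rabs dx * r)).
  { apply Rle_trans with (b2 (S (S m)) (Ss b1 X C (S (S m))) * n1 (d (S (S m))) (fun k => dx * W (S (S m)) j0 k)).
    apply Hmono. apply Hb2; auto. intros k Hk. unfold dlayer. rewrite !layer_S.
    replace (dx * W (S (S m)) j0 k) with (zz d sigma Wt x (S (S m)) k - zz d sigma W x (S (S m)) k).
    apply Hlip; auto. lia. eapply Rle_trans; [apply Hent; eauto| auto]. eapply Rle_trans; [apply Hent; eauto| auto].
    unfold zz. simpl pred. rewrite <- rsum_minus.
    rewrite (rsum_single (d (S m)) _ j0); auto. unfold dx, dlayer. unfold Wt. rewrite Win_other by (left; lia). ring.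
    intros i Hi Hne. rewrite (Win_other W (S m) j0 t (S (S m))) by (left; lia).
    pose proof (Hdo i Hne). unfold dlayer in H. replace (layer d sigma Wt x (S m) i) with (layer d sigma W x (S m) i) by lra. ring.
    apply Rmult_le_compat_l. apply Hb2; auto. unfold n1. right. idtac.
    unfold r. rewrite <- rsum_scal_l. apply rsum_ext. intros; apply Rabs_mult. }
  pose proof (propag L d sigma b1 b2 n1 W Wt x C X (S (S m)) Hb1 Hb2 Hsig1 Hlip HN HM HM' HC HX Hx) as Hpr.
  specialize (Hpr ltac:(intros q i j Hq; unfold Wt; apply Win_other; left; lia) (L - S (S m))%nat ltac:(lia)).
  replace (S (S m) + (L - S (S m)))%nat with L in Hpr by lia.
  eapply Rle_trans. apply Hpr.
  pose proof (Pr_nonneg b2 b1 X C (S (S m)) (L - S (S m)) Hb1 Hb2 HX HC) as HPr.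
  pose proof (Hb2 (S (S m)) _ HSs2). pose proof (Hb2 (S m) _ HSs).
  assert (Hr0: 0 <= r) by (apply rsum_nonneg; intros; apply Rabs_pos).
  assert (HP0: 0 <= P) by apply pnorm_nonneg.
  pose proof (Rs_nonneg b1 X C m Hb1 HX HC).
  unfold Kin. simpl pred. fold P r.
  apply Rle_trans with (Pr b2 b1 X C (S (S m)) (L - S (S m)) * (b2 (S (S m)) (Ss b1 X C (S (S m))) * (Rabs dx * r))).
  apply Rmult_le_compat_l; auto.
  assert (Rabs dx <= b2 (S m) (Ss b1 X C (S m)) * (t * (Rs b1 X C m * P))).
  { eapply Rle_trans; [apply Hdx|]. apply Rmult_le_compat_l; auto. apply Rmult_le_compat_l; lra. }
  apply Rle_trans with (Pr b2 b1 X C (S (S m)) (L - S (S m)) * (b2 (S (S m)) (Ss b1 X C (S (S m))) *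
     ((b2 (S m) (Ss b1 X C (S m)) * (t * (Rs b1 X C m * P))) * r))).
  apply Rmult_le_compat_l; auto. apply Rmult_le_compat_l; auto. apply Rmult_le_compat_r; auto.
  right; ring.
Qed.

Lemma Kin_nonneg L b1 b2 X C l : (forall l S, 0 <= S -> 0 <= b1 l S) -> (forall l S, 0 <= S -> 0 <= b2 l S) ->
  0 <= X -> 0 <= C -> 0 <= Kin L b1 b2 X C l.
Proof. intros. unfold Kin. pose proof (Pr_nonneg b2 b1 X C (S l) (L - S l) H H0 H1 H2).
  assert (0 <= Ss b1 X C (S l)) by (unfold Ss; apply Rmult_le_pos; auto; apply Rs_nonneg; auto).
  assert (0 <= Ss b1 X C l) by (unfold Ss; apply Rmult_le_pos; auto; apply Rs_nonneg; auto).
  pose proof (H0 (S l) _ H4). pose proof (H0 l _ H5). pose proof (Rs_nonneg b1 X C (pred l) H H1 H2).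
  repeat apply Rmult_le_pos; auto. Qed.

Lemma proper_unit L d W l j0 : proper L d W -> (1 <= l < L)%nat -> (j0 < d l)%nat ->
  nonzero_vec (d (pred l)) (fun i => W l i j0) = true /\ nonzero_vec (d (S l)) (fun k => W (S l) j0 k) = true.
Proof. intros H Hl Hj. specialize (H l ltac:(lia)). unfold proper_dim in H.
  replace (andb (Nat.ltb 0 l) (Nat.ltb l L)) with true in H.
  pose proof (countb_full _ _ H j0 Hj). apply andb_prop in H0. auto.
  symmetry. apply andb_true_intro. split; apply Nat.ltb_lt; lia. Qed.

Lemma in_unit {Y : Type} (L d0 dL : nat) (sigma : nat -> R -> R) (e : (nat -> R) -> Y -> R)
  (D : list ((nat -> R) * Y)) (b1 b2 : nat -> R -> R) (b3 : R -> R)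
  (Hright : forall l s, (1 <= l <= L)%nat -> exists Dr, right_deriv (sigma l) s Dr)
  (Hleft : forall l s, (1 <= l <= L)%nat -> exists Dl, left_deriv (sigma l) s Dl)
  (Hb1 : forall l S, 0 <= S -> 0 <= b1 l S)
  (Hb2 : forall l S, 0 <= S -> 0 <= b2 l S)
  (Hb3 : forall S, 0 <= S -> 0 <= b3 S)
  (Hsig1 : forall l S s, (1 <= l <= L)%nat -> 0 <= S -> Rabs s <= S ->
             Rabs (sigma l s) <= b1 l S * Rabs s)
  (Hsig2 : forall l S s Ds, (1 <= l <= L)%nat -> 0 <= S -> Rabs s <= S ->
             (left_deriv (sigma l) s Ds \/ right_deriv (sigma l) s Ds) ->
             Rabs Ds <= b2 l S)
  (He_nonneg : forall v y, padded dL v -> 0 <= e v y)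
  (He_diff : forall v y, padded dL v -> exists g, is_grad dL e y v g)
  (He_bound : forall S v y g, 0 <= S -> padded dL v -> e v y <= S ->
             is_grad dL e y v g -> forall i, (i < dL)%nat -> Rabs (g i) <= b3 S)
  (lam p : R) (Hlam : 0 < lam) (Hp : 1 <= p) (B : R) d W l j0 :
  d 0%nat = d0 -> d L = dL -> proper_B_local_min Reg_in L sigma e D lam p B d W ->
  (1 <= l < L)%nat -> (j0 < d l)%nat ->
  lam <= (b3 (INR (length D) * Rabs B) + 1) * Kin L b1 b2 (Xb n1 d0 D) (Rabs B / lam) l *
         rsum (d (S l)) (fun k => Rabs (W (S l) j0 k)).
Proof.
  intros Hd0 HdL [Hmin [HE Hprop]] Hl Hj.
  set (X := Xb n1 d0 D). set (C := Rabs B / lam).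
  assert (HX: 0 <= X) by apply Xb_nonneg.
  assert (HC: 0 <= C) by (unfold C, Rdiv; apply Rmult_le_pos; [apply Rabs_pos| left; apply Rinv_0_lt_compat; auto]).
  assert (HOB: Omega Reg_in L d W lam p <= B) by (eapply Omega_le_B; eauto).
  assert (Hrow: rowcons L d W C) by (apply (rowcons_in L d W lam p B); auto).
  pose proof (lip_from L sigma b2 Hright Hleft Hsig2) as Hlip.
  set (P := pnorm p (d (pred l)) (fun i => W l i j0)).
  set (r := rsum (d (S l)) (fun k => Rabs (W (S l) j0 k))).
  assert (HP: 0 < P) by (apply pnorm_pos_nz; auto; apply (proper_unit L d W l j0); auto).
  assert (Hr: 0 <= r) by (apply rsum_nonneg; intros; apply Rabs_pos).
  pose proof (Kin_nonneg L b1 b2 X C l Hb1 Hb2 HX HC) as HK.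
  pose proof (key L dL sigma e D b3 Reg_in lam p B d W (Win W l j0) P P (Kin L b1 b2 X C l * P * r)
    Hb3 He_nonneg He_diff He_bound Hlam HdL Hmin HE (Omega_nonneg _ _ _ _ _ _ Hlam)
    ltac:(lra) ltac:(apply Rmult_le_pos; [apply Rmult_le_pos|]; lra)) as Hk.
  assert (Hk2: lam * P <= (b3 (INR (length D) * Rabs B) + 1) * (Kin L b1 b2 X C l * P * r)).
  { apply Hk.
    - intros t Ht q i j Hq Hi Hj'. destruct (Nat.eq_dec q l); destruct (Nat.eq_dec j j0).
      subst. rewrite Win_same. replace ((1 - t) * W l i j0 - W l i j0) with (- t * W l i j0) by ring.
      rewrite Rabs_mult, Rabs_Ropp, (Rabs_pos_eq t) by lra. apply Rmult_le_compat_l. lra.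
      apply (pnorm_ent p _ (fun i => W l i j0)); auto.
      all: rewrite Win_other by tauto; unfold Rminus; rewrite Rplus_opp_r, Rabs_R0; apply Rmult_le_pos; lra.
    - intros t Ht. apply Omega_Win; auto; try lia; lra.
    - intros t Ht xy Hin.
      assert (Hx: n1 (d 0%nat) (fst xy) <= X) by (rewrite Hd0; apply Xb_ge; auto).
      eapply Rle_trans; [|apply (in_netdiff L d sigma b1 b2 W (fst xy) C X p l j0 t); auto; lra].
      right. unfold n1. rewrite HdL. apply rsum_ext. intros i Hi. unfold net, dlayer.
      rewrite HdL. replace (Nat.ltb i dL) with true by (symmetry; apply Nat.ltb_lt; auto). reflexivity. }
  assert (0 <= b3 (INR (length D) * Rabs B)) by (apply Hb3; apply Rmult_le_pos; [apply pos_INR| apply Rabs_pos]).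
  apply Rmult_le_reg_r with P; auto.
  replace ((b3 (INR (length D) * Rabs B) + 1) * Kin L b1 b2 X C l * r * P) with
    ((b3 (INR (length D) * Rabs B) + 1) * (Kin L b1 b2 X C l * P * r)) by ring. lra.
Qed.

Definition Wout (W : nat -> nat -> nat -> R) l i0 t : nat -> nat -> nat -> R :=
  fun q i j => if andb (Nat.eqb q l) (Nat.eqb i i0) then (1 - t) * W q i j else W q i j.

Definition colcons L d (W : nat -> nat -> nat -> R) C :=
  forall q k, (1 <= q <= L)%nat -> (k < d q)%nat -> rsum (d (pred q)) (fun i => Rabs (W q i k)) <= C.

Lemma colcons_dom L d W W' C : colcons L d W C -> (forall q i k, Rabs (W' q i k) <= Rabs (W q i k)) -> colcons L d W' C.
Proof. intros H H' q k Hq Hk. apply Rle_trans with (rsum (d (pred q)) (fun i => Rabs (W q i k))).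
  apply rsum_le; intros; apply H'. apply H; auto. Qed.

Lemma Wout_dom W l j0 t : 0 <= t <= 1 -> forall q i k, Rabs (Wout W l j0 t q i k) <= Rabs (W q i k).
Proof. intros Ht q i k. unfold Wout. destruct (andb _ _). rewrite Rabs_mult, Rabs_pos_eq by lra.
  pose proof (Rabs_pos (W q i k)). nra. lra. Qed.

Lemma colcons_out L d W lam p B : 1 <= p -> 0 < lam -> Omega Reg_out L d W lam p <= B -> colcons L d W (Rabs B / lam).
Proof. intros Hp Hlam H q k Hq Hk. eapply Rle_trans; [|apply (out_rows L d W lam p B Hlam H q Hq)].
  apply rsum_le. intros i Hi. apply (pnorm_ent p (d q) (fun j => W q i j)); auto. Qed.

Lemma Wout_other W l i0 t q i j : (q <> l \/ i <> i0) -> Wout W l i0 t q i j = W q i j.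
Proof. intros H. unfold Wout. destruct (Nat.eqb_spec q l); destruct (Nat.eqb_spec i i0); simpl; auto.
  exfalso; destruct H; auto. Qed.

Lemma Wout_same W l i0 t j : Wout W l i0 t l i0 j = (1 - t) * W l i0 j.
Proof. unfold Wout. rewrite !Nat.eqb_refl. reflexivity. Qed.

Lemma Omega_Wout L d W lam p l i0 t : 1 <= p -> (1 <= l <= L)%nat -> (i0 < d (pred l))%nat -> 0 <= t <= 1 ->
  Omega Reg_out L d (Wout W l i0 t) lam p = Omega Reg_out L d W lam p - lam * t * pnorm p (d l) (fun j => W l i0 j).
Proof. intros Hp Hl Hj Ht. simpl. unfold lsum.
  rewrite (rsum_change L (fun k => rsum (d (pred (S k))) (fun i => pnorm p (d (S k)) (fun j => W (S k) i j)))
     (fun k => rsum (d (pred (S k))) (fun i => pnorm p (d (S k)) (fun j => Wout W l i0 t (S k) i j))) (pred l)).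
  replace (S (pred l)) with l by lia.
  rewrite (rsum_change (d (pred l)) (fun i => pnorm p (d l) (fun j => W l i j))
     (fun i => pnorm p (d l) (fun j => Wout W l i0 t l i j)) i0); auto.
  rewrite (pnorm_ext p _ (fun j => Wout W l i0 t l i0 j) (fun j => (1 - t) * W l i0 j)) by (intros; apply Wout_same).
  rewrite pnorm_scale by lra. change (pnorm p (d l) (fun j => W l i0 j)) with (pnorm p (d l) (W l i0)). ring.
  intros j Hj' Hne. apply pnorm_ext. intros; rewrite Wout_other; auto.
  lia.
  intros k Hk Hne. apply rsum_ext. intros j Hj'. apply pnorm_ext. intros. rewrite Wout_other; auto. left; lia.
Qed.

Definition Kout L b1 b2 X C l :=
  Pr b2 b1 X C (S l) (L - S l) * b2 (S l) (Ss b1 X C (S l)) * b1 l (Ss b1 X C l) * Rs b1 X C (pred l).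

Lemma out_netdiff L d sigma b1 b2 W x C X p l j0 t :
  (forall l S, 0 <= S -> 0 <= b1 l S) ->
  (forall l S, 0 <= S -> 0 <= b2 l S) ->
  (forall l S s, (1 <= l <= L)%nat -> 0 <= S -> Rabs s <= S -> Rabs (sigma l s) <= b1 l S * Rabs s) ->
  (forall l S a b, (1 <= l <= L)%nat -> 0 <= S -> Rabs a <= S -> Rabs b <= S ->
      Rabs (sigma l b - sigma l a) <= b2 l S * Rabs (b - a)) ->
  1 <= p -> colcons L d W C -> 0 <= C -> 0 <= X -> ninf (d 0%nat) x <= X ->
  (1 <= l < L)%nat -> (j0 < d l)%nat -> 0 <= t <= 1 ->
  ninf (d L) (dlayer d sigma W (Wout W (S l) j0 t) x L) <=
    t * (Kout L b1 b2 X C l * pnorm p (d (S l)) (fun k => W (S l) j0 k) * rsum (d (pred l)) (fun i => Rabs (W l i j0))).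
Proof.
  intros Hb1 Hb2 Hsig1 Hlip Hp HW HC HX Hx Hl Hj Ht.
  set (Wt := Wout W (S l) j0 t).
  assert (HM: MatOK ninf d W C L) by (apply MatOK_out; auto).
  assert (HM': MatOK ninf d Wt C L) by (apply MatOK_out; auto; apply (colcons_dom L d W); auto; apply Wout_dom; auto).
  pose proof NormOK_ninf as HN. pose proof HN as [Hnn [Hent Hmono]].
  set (P := pnorm p (d (S l)) (fun k => W (S l) j0 k)).
  set (c := rsum (d (pred l)) (fun i => Rabs (W l i j0))).
  destruct l as [|m]; [lia|]. simpl pred in *.
  assert (Hag: forall j, layer d sigma Wt x (S m) j = layer d sigma W x (S m) j).
  { apply layer_agree. intros q i j Hq. unfold Wt; apply Wout_other; left; lia. }
  destruct (acts L d sigma b1 ninf W x C X Hb1 Hsig1 HN HM HC HX Hx (S m) ltac:(lia)) as [_ Hz].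
  specialize (Hz ltac:(lia)).
  destruct (acts L d sigma b1 ninf W x C X Hb1 Hsig1 HN HM HC HX Hx m ltac:(lia)) as [Hlm _].
  set (z := zz d sigma W x (S m) j0).
  set (xj := layer d sigma W x (S m) j0).
  assert (HSs: 0 <= Ss b1 X C (S m)) by (unfold Ss; apply Rmult_le_pos; auto; apply Rs_nonneg; auto).
  assert (Hzb: Rabs z <= Ss b1 X C (S m)) by (eapply Rle_trans; [apply Hent; eauto| auto]).
  assert (Hzp: Rabs z <= Rs b1 X C m * c).
  { unfold z, zz. simpl pred. eapply Rle_trans. apply rsum_abs.
    apply Rle_trans with (ninf (d m) (layer d sigma W x m) * c).
    unfold c. rewrite <- rsum_scal_l. apply rsum_le. intros i Hi. rewrite Rabs_mult. apply Rmult_le_compat_r. apply Rabs_pos.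
    apply ninf_ent; auto.
    apply Rmult_le_compat_r. apply rsum_nonneg; intros; apply Rabs_pos. apply Hlm. }
  assert (Hxj: Rabs xj <= b1 (S m) (Ss b1 X C (S m)) * (Rs b1 X C m * c)).
  { unfold xj. rewrite layer_S. fold z. eapply Rle_trans. apply Hsig1; eauto. lia.
    apply Rmult_le_compat_l; auto. }
  assert (HSs2: 0 <= Ss b1 X C (S (S m))) by (unfold Ss; apply Rmult_le_pos; auto; apply Rs_nonneg; auto).
  destruct (acts L d sigma b1 ninf W x C X Hb1 Hsig1 HN HM HC HX Hx (S (S m)) ltac:(lia)) as [_ Hz2].
  destruct (acts L d sigma b1 ninf Wt x C X Hb1 Hsig1 HN HM' HC HX Hx (S (S m)) ltac:(lia)) as [_ Hz2'].
  specialize (Hz2 ltac:(lia)). specialize (Hz2' ltac:(lia)).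
  assert (H2: ninf (d (S (S m))) (dlayer d sigma W Wt x (S (S m))) <= b2 (S (S m)) (Ss b1 X C (S (S m))) * (t * Rabs xj * P)).
  { apply Rle_trans with (b2 (S (S m)) (Ss b1 X C (S (S m))) * ninf (d (S (S m))) (fun k => - t * xj * W (S (S m)) j0 k)).
    apply Hmono. apply Hb2; auto. intros k Hk. unfold dlayer. rewrite !layer_S.
    replace (- t * xj * W (S (S m)) j0 k) with (zz d sigma Wt x (S (S m)) k - zz d sigma W x (S (S m)) k).
    apply Hlip; auto. lia. eapply Rle_trans; [apply Hent; eauto| auto]. eapply Rle_trans; [apply Hent; eauto| auto].
    unfold zz. simpl pred. rewrite <- rsum_minus.
    rewrite (rsum_single (d (S m)) _ j0); auto. unfold Wt. rewrite Wout_same, Hag. unfold xj. ring.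
    intros i Hi Hne. unfold Wt. rewrite (Wout_other W (S (S m)) j0 t (S (S m))) by (right; auto). rewrite Hag. ring.
    apply Rmult_le_compat_l. apply Hb2; auto. apply ninf_le.
    pose proof (Rabs_pos xj). apply Rmult_le_pos; [nra| apply pnorm_nonneg].
    intros k Hk. rewrite !Rabs_mult, Rabs_Ropp, (Rabs_pos_eq t) by lra.
    apply Rmult_le_compat_l. pose proof (Rabs_pos xj). nra.
    apply (pnorm_ent p (d (S (S m))) (fun k => W (S (S m)) j0 k)); auto. }
  pose proof (propag L d sigma b1 b2 ninf W Wt x C X (S (S m)) Hb1 Hb2 Hsig1 Hlip HN HM HM' HC HX Hx) as Hpr.
  specialize (Hpr ltac:(intros q i j Hq; unfold Wt; apply Wout_other; left; lia) (L - S (S m))%nat ltac:(lia)).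
  replace (S (S m) + (L - S (S m)))%nat with L in Hpr by lia.
  eapply Rle_trans. apply Hpr.
  pose proof (Pr_nonneg b2 b1 X C (S (S m)) (L - S (S m)) Hb1 Hb2 HX HC) as HPr.
  pose proof (Hb2 (S (S m)) _ HSs2). pose proof (Hb1 (S m) _ HSs).
  assert (Hc0: 0 <= c) by (apply rsum_nonneg; intros; apply Rabs_pos).
  assert (HP0: 0 <= P) by apply pnorm_nonneg.
  pose proof (Rs_nonneg b1 X C m Hb1 HX HC).
  unfold Kout. simpl pred. fold P c.
  apply Rle_trans with (Pr b2 b1 X C (S (S m)) (L - S (S m)) * (b2 (S (S m)) (Ss b1 X C (S (S m))) * (t * Rabs xj * P))).
  apply Rmult_le_compat_l; auto.
  apply Rle_trans with (Pr b2 b1 X C (S (S m)) (L - S (S m)) * (b2 (S (S m)) (Ss b1 X C (S (S m))) *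
     (t * (b1 (S m) (Ss b1 X C (S m)) * (Rs b1 X C m * c)) * P))).
  apply Rmult_le_compat_l; auto. apply Rmult_le_compat_l; auto. apply Rmult_le_compat_r; auto.
  apply Rmult_le_compat_l; lra.
  right; ring.
Qed.

Lemma Kout_nonneg L b1 b2 X C l : (forall l S, 0 <= S -> 0 <= b1 l S) -> (forall l S, 0 <= S -> 0 <= b2 l S) ->
  0 <= X -> 0 <= C -> 0 <= Kout L b1 b2 X C l.
Proof. intros. unfold Kout. pose proof (Pr_nonneg b2 b1 X C (S l) (L - S l) H H0 H1 H2).
  assert (0 <= Ss b1 X C (S l)) by (unfold Ss; apply Rmult_le_pos; auto; apply Rs_nonneg; auto).
  assert (0 <= Ss b1 X C l) by (unfold Ss; apply Rmult_le_pos; auto; apply Rs_nonneg; auto).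
  pose proof (H0 (S l) _ H4). pose proof (H l _ H5). pose proof (Rs_nonneg b1 X C (pred l) H H1 H2).
  repeat apply Rmult_le_pos; auto. Qed.

Lemma out_unit {Y : Type} (L d0 dL : nat) (sigma : nat -> R -> R) (e : (nat -> R) -> Y -> R)
  (D : list ((nat -> R) * Y)) (b1 b2 : nat -> R -> R) (b3 : R -> R)
  (Hright : forall l s, (1 <= l <= L)%nat -> exists Dr, right_deriv (sigma l) s Dr)
  (Hleft : forall l s, (1 <= l <= L)%nat -> exists Dl, left_deriv (sigma l) s Dl)
  (Hb1 : forall l S, 0 <= S -> 0 <= b1 l S)
  (Hb2 : forall l S, 0 <= S -> 0 <= b2 l S)
  (Hb3 : forall S, 0 <= S -> 0 <= b3 S)
  (Hsig1 : forall l S s, (1 <= l <= L)%nat -> 0 <= S -> Rabs s <= S ->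
             Rabs (sigma l s) <= b1 l S * Rabs s)
  (Hsig2 : forall l S s Ds, (1 <= l <= L)%nat -> 0 <= S -> Rabs s <= S ->
             (left_deriv (sigma l) s Ds \/ right_deriv (sigma l) s Ds) ->
             Rabs Ds <= b2 l S)
  (He_nonneg : forall v y, padded dL v -> 0 <= e v y)
  (He_diff : forall v y, padded dL v -> exists g, is_grad dL e y v g)
  (He_bound : forall S v y g, 0 <= S -> padded dL v -> e v y <= S ->
             is_grad dL e y v g -> forall i, (i < dL)%nat -> Rabs (g i) <= b3 S)
  (lam p : R) (Hlam : 0 < lam) (Hp : 1 <= p) (B : R) d W l j0 :
  d 0%nat = d0 -> d L = dL -> proper_B_local_min Reg_out L sigma e D lam p B d W ->
  (1 <= l < L)%nat -> (j0 < d l)%nat ->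
  lam <= (b3 (INR (length D) * Rabs B) + 1) * (INR dL * Kout L b1 b2 (Xb ninf d0 D) (Rabs B / lam) l) *
         rsum (d (pred l)) (fun i => Rabs (W l i j0)).
Proof.
  intros Hd0 HdL [Hmin [HE Hprop]] Hl Hj.
  set (X := Xb ninf d0 D). set (C := Rabs B / lam).
  assert (HX: 0 <= X) by apply Xb_nonneg.
  assert (HC: 0 <= C) by (unfold C, Rdiv; apply Rmult_le_pos; [apply Rabs_pos| left; apply Rinv_0_lt_compat; auto]).
  assert (HOB: Omega Reg_out L d W lam p <= B) by (eapply Omega_le_B; eauto).
  assert (Hcol: colcons L d W C) by (apply (colcons_out L d W lam p B); auto).
  pose proof (lip_from L sigma b2 Hright Hleft Hsig2) as Hlip.
  set (P := pnorm p (d (S l)) (fun k => W (S l) j0 k)).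
  set (c := rsum (d (pred l)) (fun i => Rabs (W l i j0))).
  assert (HP: 0 < P) by (apply pnorm_pos_nz; auto; apply (proper_unit L d W l j0); auto).
  assert (Hc: 0 <= c) by (apply rsum_nonneg; intros; apply Rabs_pos).
  pose proof (Kout_nonneg L b1 b2 X C l Hb1 Hb2 HX HC) as HK.
  pose proof (pos_INR dL) as HdL0.
  assert (HQ: 0 <= INR dL * Kout L b1 b2 X C l * P * c).
  { apply Rmult_le_pos; auto. apply Rmult_le_pos; [apply Rmult_le_pos|]; auto; lra. }
  pose proof (key L dL sigma e D b3 Reg_out lam p B d W (Wout W (S l) j0) P P (INR dL * Kout L b1 b2 X C l * P * c)
    Hb3 He_nonneg He_diff He_bound Hlam HdL Hmin HE (Omega_nonneg _ _ _ _ _ _ Hlam)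
    ltac:(lra) HQ) as Hk.
  assert (Hk2: lam * P <= (b3 (INR (length D) * Rabs B) + 1) * (INR dL * Kout L b1 b2 X C l * P * c)).
  { apply Hk.
    - intros t Ht q i j Hq Hi Hj'. destruct (Nat.eq_dec q (S l)); destruct (Nat.eq_dec i j0).
      subst. rewrite Wout_same. replace ((1 - t) * W (S l) j0 j - W (S l) j0 j) with (- t * W (S l) j0 j) by ring.
      rewrite Rabs_mult, Rabs_Ropp, (Rabs_pos_eq t) by lra. apply Rmult_le_compat_l. lra.
      apply (pnorm_ent p _ (fun k => W (S l) j0 k)); auto.
      all: rewrite Wout_other by tauto; unfold Rminus; rewrite Rplus_opp_r, Rabs_R0; apply Rmult_le_pos; lra.
    - intros t Ht. apply Omega_Wout; auto; try lia; lra.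
    - intros t Ht xy Hin.
      assert (Hx: ninf (d 0%nat) (fst xy) <= X) by (rewrite Hd0; apply Xb_ge; auto).
      pose proof (out_netdiff L d sigma b1 b2 W (fst xy) C X p l j0 t Hb1 Hb2 Hsig1 Hlip Hp Hcol HC HX Hx Hl Hj ltac:(lra)) as Hnd.
      fold P c in Hnd.
      apply Rle_trans with (INR dL * (t * (Kout L b1 b2 X C l * P * c))); [| right; ring].
      eapply Rle_trans; [|apply Rmult_le_compat_l; [auto| apply Hnd]].
      replace (rsum dL (fun i => Rabs (net L d sigma (Wout W (S l) j0 t) (fst xy) i - net L d sigma W (fst xy) i)))
        with (rsum (d L) (fun i => Rabs (dlayer d sigma W (Wout W (S l) j0 t) (fst xy) L i))).
      rewrite <- HdL. apply (N_sum ninf (d L)). apply NormOK_ninf.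
      rewrite HdL. apply rsum_ext. intros i Hi. unfold net, dlayer.
      rewrite HdL. replace (Nat.ltb i dL) with true by (symmetry; apply Nat.ltb_lt; auto). reflexivity. }
  assert (0 <= b3 (INR (length D) * Rabs B)) by (apply Hb3; apply Rmult_le_pos; [apply pos_INR| apply Rabs_pos]).
  apply Rmult_le_reg_r with P; auto.
  replace ((b3 (INR (length D) * Rabs B) + 1) * (INR dL * Kout L b1 b2 X C l) * c * P) with
    ((b3 (INR (length D) * Rabs B) + 1) * (INR dL * Kout L b1 b2 X C l * P * c)) by ring. lra.
Qed.

Lemma count m n Mn (a : nat -> nat -> R) c Cb p :
  1 <= p -> 0 < c -> (n <= Mn)%nat ->
  (forall j, (j < m)%nat -> c <= rsum n (fun i => Rabs (a i j))) ->
  (forall i, (i < n)%nat -> pnorm p m (fun j => a i j) <= Cb) ->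
  INR m * rpow (c / (INR Mn + 1)) p <= INR Mn * rpow Cb p.
Proof.
  intros Hp Hc Hn Hrow Hcol.
  destruct (Nat.eq_dec n 0) as [E|E].
  { subst n. destruct m. simpl. rewrite Rmult_0_l. apply Rmult_le_pos; [apply pos_INR| apply rpow_nonneg].
    specialize (Hrow 0%nat ltac:(lia)). simpl in Hrow. lra. }
  assert (HnR: 0 < INR n) by (apply lt_0_INR; lia).
  assert (HnM: INR n <= INR Mn) by (apply le_INR; auto).
  set (c' := c / (INR Mn + 1)).
  assert (Hc': 0 < c') by (unfold c'; apply Rdiv_lt_0_compat; lra).
  assert (Hc'n: c' <= c / INR n).
  { unfold c', Rdiv. apply Rmult_le_compat_l; [lra|]. apply Rinv_le_contravar; lra. }
  rewrite <- rsum_const.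
  apply Rle_trans with (rsum m (fun j => rsum n (fun i => rpow (Rabs (a i j)) p))).
  { apply rsum_le. intros j Hj. destruct (rsum_exists_big n (fun i => Rabs (a i j)) c Hc (Hrow j Hj)) as [i [Hi Hai]].
    apply Rle_trans with (rpow (Rabs (a i j)) p).
    apply rpow_mono; [lra| lra].
    apply (rsum_term n (fun i => rpow (Rabs (a i j)) p)); auto. intros; apply rpow_nonneg. }
  rewrite <- rsum_swap.
  apply Rle_trans with (INR n * rpow Cb p).
  { rewrite <- rsum_const. apply rsum_le. intros i Hi. rewrite <- pnorm_pow by auto.
    apply rpow_mono; [split; [apply pnorm_nonneg| apply Hcol; auto]| lra]. }
  apply Rmult_le_compat_r; auto. apply rpow_nonneg.
Qed.

Lemma count_nat m n Mn (a : nat -> nat -> R) c Cb p :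
  1 <= p -> 0 < c -> (n <= Mn)%nat ->
  (forall j, (j < m)%nat -> c <= rsum n (fun i => Rabs (a i j))) ->
  (forall i, (i < n)%nat -> pnorm p m (fun j => a i j) <= Cb) ->
  (m <= natb (INR Mn * rpow Cb p / rpow (c / (INR Mn + 1)) p))%nat.
Proof. intros. pose proof (count m n Mn a c Cb p H H0 H1 H2 H3).
  assert (Hpos: 0 < rpow (c / (INR Mn + 1)) p).
  { apply rpow_pos. apply Rdiv_lt_0_compat; auto. pose proof (pos_INR Mn); lra. }
  apply INR_le. eapply Rle_trans; [|apply natb_ge].
  apply Rmult_le_reg_r with (rpow (c / (INR Mn + 1)) p); auto.
  unfold Rdiv at 2. rewrite Rmult_assoc, Rinv_l by lra. lra. Qed.

Fixpoint natsum (n : nat) (f : nat -> nat) : nat := match n with O => O | S k => (natsum k f + f k)%nat end.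
Lemma natsum_ge n f k : (k < n)%nat -> (f k <= natsum n f)%nat.
Proof. induction n; intros; simpl. lia. destruct (Nat.eq_dec k n). subst; lia. specialize (IHn ltac:(lia)). lia. Qed.

Lemma lam_div lam A r : 0 < lam -> 0 <= A -> 0 <= r -> lam <= A * r -> lam / (A + 1) <= r.
Proof. intros. apply Rmult_le_reg_r with (A + 1); [lra|]. unfold Rdiv. rewrite Rmult_assoc, Rinv_l by lra. nra. Qed.

Lemma lam_div_pos lam A : 0 < lam -> 0 <= A -> 0 < lam / (A + 1).
Proof. intros. apply Rdiv_lt_0_compat; lra. Qed.

Fixpoint Mrec (base : nat) (f : nat -> nat -> nat) (k : nat) : nat :=
  match k with O => base | S k' => f k' (Mrec base f k') end.

Theorem lemma4
  (L d0 dL : nat) (Y : Type)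
  (sigma : nat -> R -> R) (e : (nat -> R) -> Y -> R)
  (D : list ((nat -> R) * Y))
  (b1 b2 : nat -> R -> R) (b3 : R -> R)
  (* each sigma_l (1 <= l <= L) is left- and right-differentiable everywhere *)
  (Hright : forall l s, (1 <= l <= L)%nat -> exists Dr, right_deriv (sigma l) s Dr)
  (Hleft : forall l s, (1 <= l <= L)%nat -> exists Dl, left_deriv (sigma l) s Dl)
  (* b1, b2, b3 : R_{>=0} -> R_{>=0} *)
  (Hb1 : forall l S, 0 <= S -> 0 <= b1 l S)
  (Hb2 : forall l S, 0 <= S -> 0 <= b2 l S)
  (Hb3 : forall S, 0 <= S -> 0 <= b3 S)
  (Hsig1 : forall l S s, (1 <= l <= L)%nat -> 0 <= S -> Rabs s <= S ->
             Rabs (sigma l s) <= b1 l S * Rabs s)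
  (Hsig2 : forall l S s Ds, (1 <= l <= L)%nat -> 0 <= S -> Rabs s <= S ->
             (left_deriv (sigma l) s Ds \/ right_deriv (sigma l) s Ds) ->
             Rabs Ds <= b2 l S)
  (* e is nonnegative and differentiable in its first argument v in R^{d_L} *)
  (He_nonneg : forall v y, padded dL v -> 0 <= e v y)
  (He_diff : forall v y, padded dL v -> exists g, is_grad dL e y v g)
  (He_bound : forall S v y g, 0 <= S -> padded dL v -> e v y <= S ->
             is_grad dL e y v g -> forall i, (i < dL)%nat -> Rabs (g i) <= b3 S)
  (k : reg_kind) (lam p : R) (Hlam : 0 < lam) (Hp : 1 <= p)
  (B : R) :
  exists M : nat,
    forall (d : nat -> nat) (W : nat -> nat -> nat -> R),
      d 0%nat = d0 -> d L = dL ->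
      proper_B_local_min k L sigma e D lam p B d W ->
      forall l, (1 <= l < L)%nat -> (d l <= M)%nat.
Proof.
  set (Se := INR (length D) * Rabs B). set (C := Rabs B / lam).
  assert (HSe: 0 <= Se) by (unfold Se; apply Rmult_le_pos; [apply pos_INR| apply Rabs_pos]).
  assert (Hb3S: 0 <= b3 Se) by auto.
  assert (HC: 0 <= C) by (unfold C, Rdiv; apply Rmult_le_pos; [apply Rabs_pos| left; apply Rinv_0_lt_compat; auto]).
  destruct k.
  - set (X := Xb n1 d0 D). assert (HX: 0 <= X) by apply Xb_nonneg.
    set (A := fun l => (b3 Se + 1) * Kin L b1 b2 X C l).
    assert (HA: forall l, 0 <= A l) by (intros; unfold A; apply Rmult_le_pos; [lra| apply Kin_nonneg; auto]).
    set (cl := fun l => lam / (A l + 1)).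
    set (Md := Mrec dL (fun k' M => natb (INR M * rpow C p / rpow (cl (L - S k')%nat / (INR M + 1)) p))).
    exists (natsum L Md).
    intros d W Hd0 HdL Hpm l Hl.
    assert (Hind: forall k, (1 <= L - k)%nat -> (d (L - k)%nat <= Md k)%nat).
    { induction k; intros Hk. rewrite Nat.sub_0_r, HdL. change (Md 0%nat) with dL. lia.
      specialize (IHk ltac:(lia)). set (l' := (L - S k)%nat).
      assert (El: S l' = (L - k)%nat) by (unfold l'; lia).
      change (Md (S k)) with (natb (INR (Md k) * rpow C p / rpow (cl l' / (INR (Md k) + 1)) p)).
      apply (count_nat (d l') (d (S l')) (Md k) (fun i j => W (S l') j i) (cl l') C p); auto.
      + unfold cl; apply lam_div_pos; auto.
      + rewrite El; auto.
      + intros j Hj. unfold cl. apply lam_div; auto. apply rsum_nonneg; intros; apply Rabs_pos.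
        pose proof (in_unit L d0 dL sigma e D b1 b2 b3 Hright Hleft Hb1 Hb2 Hb3 Hsig1 Hsig2 He_nonneg He_diff He_bound
          lam p Hlam Hp B d W l' j Hd0 HdL Hpm ltac:(unfold l'; lia) Hj). unfold A. fold Se C X in H. lra.
      + intros i Hi. destruct Hpm as [_ [HE _]].
        assert (HOB: Omega Reg_in L d W lam p <= B) by (eapply Omega_le_B; eauto).
        pose proof (in_cols L d W lam p B Hlam HOB (S l') ltac:(unfold l'; lia)) as Hc. fold C in Hc.
        eapply Rle_trans; [|apply Hc]. simpl pred.
        apply (rsum_term (d (S l')) (fun j => pnorm p (d l') (fun i0 => W (S l') i0 j))); auto.
        intros; apply pnorm_nonneg. }
    replace l with (L - (L - l))%nat by lia.
    eapply Nat.le_trans. apply Hind; lia. apply natsum_ge. lia.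
  - set (X := Xb ninf d0 D). assert (HX: 0 <= X) by apply Xb_nonneg.
    set (A := fun l => (b3 Se + 1) * (INR dL * Kout L b1 b2 X C l)).
    assert (HA: forall l, 0 <= A l).
    { intros; unfold A; apply Rmult_le_pos; [lra| apply Rmult_le_pos; [apply pos_INR| apply Kout_nonneg; auto]]. }
    set (cl := fun l => lam / (A l + 1)).
    set (Mu := Mrec d0 (fun k' M => natb (INR M * rpow C p / rpow (cl (S k') / (INR M + 1)) p))).
    exists (natsum L Mu).
    intros d W Hd0 HdL Hpm l Hl.
    assert (Hind: forall l, (l < L)%nat -> (d l <= Mu l)%nat).
    { induction l0; intros Hk. rewrite Hd0. change (Mu 0%nat) with d0. lia.
      specialize (IHl0 ltac:(lia)).
      change (Mu (S l0)) with (natb (INR (Mu l0) * rpow C p / rpow (cl (S l0) / (INR (Mu l0) + 1)) p)).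
      apply (count_nat (d (S l0)) (d l0) (Mu l0) (fun i j => W (S l0) i j) (cl (S l0)) C p); auto.
      + unfold cl; apply lam_div_pos; auto.
      + intros j Hj. unfold cl. apply lam_div; auto. apply rsum_nonneg; intros; apply Rabs_pos.
        pose proof (out_unit L d0 dL sigma e D b1 b2 b3 Hright Hleft Hb1 Hb2 Hb3 Hsig1 Hsig2 He_nonneg He_diff He_bound
          lam p Hlam Hp B d W (S l0) j Hd0 HdL Hpm ltac:(lia) Hj). unfold A. fold Se C X in H. simpl pred in H. lra.
      + intros i Hi. destruct Hpm as [_ [HE _]].
        assert (HOB: Omega Reg_out L d W lam p <= B) by (eapply Omega_le_B; eauto).
        pose proof (out_rows L d W lam p B Hlam HOB (S l0) ltac:(lia)) as Hc. fold C in Hc.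
        eapply Rle_trans; [|apply Hc]. simpl pred.
        apply (rsum_term (d l0) (fun i0 => pnorm p (d (S l0)) (fun j => W (S l0) i0 j))); auto.
        intros; apply pnorm_nonneg. }
    eapply Nat.le_trans. apply Hind; lia. apply natsum_ge. lia.
Qed.
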